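(* Let $M=\begin{pmatrix}A&B\\ C&D\end{pmatrix}$ be an operator matrix on $X\oplus Y$, where $A\in\mathcal{L}(X)$ and $D\in\mathcal{L}(Y)$ have g-Drazin inverses, $B\in\mathcal{L}(Y,X)$, $C\in\mathcal{L}(X,Y)$. If $ABC=0$, $ABD=0$, $DCB=0$, $BCBC=0$ and $BCBD=0$, then $M$ has a g-Drazin inverse in $\mathcal{L}(X\oplus Y)$.
   Context: $X,Y$ are complex Banach spaces; $\mathcal{L}(X)$ denotes the Banach algebra of bounded linear operators on $X$, and $\mathcal{L}(Y,X)$ the bounded operators from $Y$ to $X$. An element $a$ of a unital Banach algebra $\mathcal{A}$ is quasinilpotent if $\lim_{n\to\infty}\|a^n\|^{1/n}=0$. An element $a\in\mathcal{A}$ has a g-Drazin (generalized Drazin) inverse if there exists $x\in\mathcal{A}$ with $x=xax$, $ax=xa$, and $a-a^2x$ quasinilpotent; such $x$ is unique and is denoted $a^d$. *)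

(* Defs.v *)
From Stdlib Require Import Reals.
Open Scope R_scope.

Record C := mkC { Cre : R ; Cim : R }.
Definition C0 : C := mkC 0 0.
Definition C1 : C := mkC 1 0.
Definition Cadd (z w : C) : C := mkC (Cre z + Cre w) (Cim z + Cim w).
Definition Cmul (z w : C) : C :=
  mkC (Cre z * Cre w - Cim z * Cim w) (Cre z * Cim w + Cim z * Cre w).
Definition Cabs (z : C) : R := sqrt (Cre z * Cre z + Cim z * Cim z).

Record CNormSp := {
  car :> Type ;
  vzero : car ;
  vadd : car -> car -> car ;
  vopp : car -> car ;
  vscal : C -> car -> car ;
  vnorm : car -> R }.

Arguments vzero {_}.
Arguments vadd {_} _ _.
Arguments vopp {_} _.
Arguments vscal {_} _ _.
Arguments vnorm {_} _.

Definition vsub {V : CNormSp} (x y : V) : V := vadd x (vopp y).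

Definition is_CVectorSpace (V : CNormSp) : Prop :=
  (forall x y z : V, vadd x (vadd y z) = vadd (vadd x y) z) /\
  (forall x y : V, vadd x y = vadd y x) /\
  (forall x : V, vadd x vzero = x) /\
  (forall x : V, vadd x (vopp x) = vzero) /\
  (forall x : V, vscal C1 x = x) /\
  (forall (a b : C) (x : V), vscal a (vscal b x) = vscal (Cmul a b) x) /\
  (forall (a : C) (x y : V), vscal a (vadd x y) = vadd (vscal a x) (vscal a y)) /\
  (forall (a b : C) (x : V), vscal (Cadd a b) x = vadd (vscal a x) (vscal b x)).

Definition is_CNorm (V : CNormSp) : Prop :=
  (forall x : V, 0 <= vnorm x) /\
  (forall x : V, vnorm x = 0 -> x = vzero) /\
  (forall (a : C) (x : V), vnorm (vscal a x) = Cabs a * vnorm x) /\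
  (forall x y : V, vnorm (vadd x y) <= vnorm x + vnorm y).

Definition is_complete (V : CNormSp) : Prop :=
  forall u : nat -> V,
    (forall eps, 0 < eps -> exists N, forall m n, (N <= m)%nat -> (N <= n)%nat ->
        vnorm (vsub (u m) (u n)) < eps) ->
    exists l : V, forall eps, 0 < eps -> exists N, forall n, (N <= n)%nat ->
        vnorm (vsub (u n) l) < eps.

Definition is_CBanach (V : CNormSp) : Prop :=
  is_CVectorSpace V /\ is_CNorm V /\ is_complete V.

Definition bounded_linear {V W : CNormSp} (f : V -> W) : Prop :=
  (forall x y : V, f (vadd x y) = vadd (f x) (f y)) /\
  (forall (a : C) (x : V), f (vscal a x) = vscal a (f x)) /\
  (exists K, forall x : V, vnorm (f x) <= K * vnorm x).

Definition is_opnorm {V W : CNormSp} (T : V -> W) (r : R) : Prop :=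
  is_lub (fun c => exists x : V, vnorm x <= 1 /\ c = vnorm (T x)) r.

Fixpoint oppow {V : CNormSp} (n : nat) (T : V -> V) : V -> V :=
  match n with
  | O => fun x => x
  | S k => fun x => T (oppow k T x)
  end.

Definition nroot (n : nat) (r : R) : R :=
  if Rlt_dec 0 r then Rpower r (/ INR n) else 0.

Definition quasinilpotent {V : CNormSp} (T : V -> V) : Prop :=
  exists u : nat -> R,
    (forall n, is_opnorm (oppow n T) (u n)) /\
    Un_cv (fun n => nroot n (u n)) 0.

Definition has_gDrazin {V : CNormSp} (a : V -> V) : Prop :=
  exists x : V -> V,
    bounded_linear x /\
    (forall v, x (a (x v)) = x v) /\
    (forall v, a (x v) = x (a v)) /\
    quasinilpotent (fun v => vsub (a v) (a (a (x v)))).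

Definition prodsp (X Y : CNormSp) : CNormSp := {|
  car := (car X * car Y)%type ;
  vzero := (vzero, vzero) ;
  vadd := fun p q => (vadd (fst p) (fst q), vadd (snd p) (snd q)) ;
  vopp := fun p => (vopp (fst p), vopp (snd p)) ;
  vscal := fun a p => (vscal a (fst p), vscal a (snd p)) ;
  vnorm := fun p => vnorm (fst p) + vnorm (snd p) |}.

Definition opmatrix {X Y : CNormSp} (A : X -> X) (B : Y -> X) (Cc : X -> Y) (D : Y -> Y)
  : prodsp X Y -> prodsp X Y :=
  fun p => (vadd (A (fst p)) (B (snd p)), vadd (Cc (fst p)) (D (snd p))).

(* Main.v *)
Require Import Defs.
From Stdlib Require Import Reals Lra Lia FunctionalExtensionality IndefiniteDescription.
Open Scope R_scope.

Class VSp (V : CNormSp) : Prop := vsp_ax : is_CVectorSpace V.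
Class NSp (V : CNormSp) : Prop := nsp_ax : is_CNorm V.

Section VS.
Context {V : CNormSp} {HV : VSp V}.

Lemma va_assoc (x y z : V) : vadd x (vadd y z) = vadd (vadd x y) z.
Proof. apply HV. Qed.
Lemma va_comm (x y : V) : vadd x y = vadd y x.
Proof. apply HV. Qed.
Lemma va_0r (x : V) : vadd x vzero = x.
Proof. apply HV. Qed.
Lemma va_oppr (x : V) : vadd x (vopp x) = vzero.
Proof. apply HV. Qed.
Lemma vs_1 (x : V) : vscal Defs.C1 x = x.
Proof. apply HV. Qed.
Lemma vs_mul a b (x : V) : vscal a (vscal b x) = vscal (Cmul a b) x.
Proof. apply HV. Qed.
Lemma vs_distv a (x y : V) : vscal a (vadd x y) = vadd (vscal a x) (vscal a y).
Proof. apply HV. Qed.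
Lemma vs_dists a b (x : V) : vscal (Cadd a b) x = vadd (vscal a x) (vscal b x).
Proof. apply HV. Qed.

Lemma va_0l (x : V) : vadd vzero x = x.
Proof. rewrite va_comm; apply va_0r. Qed.
Lemma va_oppl (x : V) : vadd (vopp x) x = vzero.
Proof. rewrite va_comm; apply va_oppr. Qed.

Lemma va_cancel_l (x y z : V) : vadd x y = vadd x z -> y = z.
Proof.
  intro H. rewrite <- (va_0l y), <- (va_0l z), <- (va_oppl x), <- !va_assoc, H. reflexivity.
Qed.

Lemma opp_unique (x y : V) : vadd x y = vzero -> y = vopp x.
Proof. intro H. apply (va_cancel_l x). rewrite H, va_oppr. reflexivity. Qed.

Lemma vopp_opp (x : V) : vopp (vopp x) = x.
Proof. symmetry. apply opp_unique. apply va_oppl. Qed.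

Lemma vopp_zero : vopp (@vzero V) = vzero.
Proof. symmetry. apply opp_unique. apply va_0r. Qed.

Lemma va_sw (a b c d : V) : vadd (vadd a b) (vadd c d) = vadd (vadd a c) (vadd b d).
Proof.
  rewrite <- !va_assoc. f_equal. rewrite !va_assoc. f_equal. apply va_comm.
Qed.

Lemma vopp_add (x y : V) : vopp (vadd x y) = vadd (vopp x) (vopp y).
Proof.
  symmetry. apply opp_unique. rewrite va_sw, !va_oppr, va_0r. reflexivity.
Qed.

Lemma vsub_self (x : V) : vsub x x = vzero.
Proof. apply va_oppr. Qed.

Lemma vsub_0r (x : V) : vsub x vzero = x.
Proof. unfold vsub. rewrite vopp_zero. apply va_0r. Qed.

Lemma vsub_eq (x y : V) : vsub x y = vzero -> x = y.
Proof. unfold vsub. intro H. apply opp_unique in H. rewrite <- (vopp_opp x), <- H, vopp_opp. reflexivity. Qed.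

Lemma vsub_add_cancel (x y : V) : vadd (vsub x y) y = x.
Proof. unfold vsub. rewrite <- va_assoc, va_oppl, va_0r. reflexivity. Qed.

Lemma vadd_sub_cancel (x y : V) : vsub (vadd x y) y = x.
Proof. unfold vsub. rewrite <- va_assoc, va_oppr, va_0r. reflexivity. Qed.

Lemma CaddZZ : Cadd Defs.C0 Defs.C0 = Defs.C0.
Proof. unfold Cadd, Defs.C0; simpl. f_equal; ring. Qed.

Lemma vs_0 (x : V) : vscal Defs.C0 x = vzero.
Proof.
  assert (H : vadd (vscal Defs.C0 x) (vscal Defs.C0 x) = vadd (vscal Defs.C0 x) vzero).
  { rewrite <- vs_dists, CaddZZ, va_0r. reflexivity. }
  apply va_cancel_l in H. exact H.
Qed.

Lemma vs_z a : vscal a (@vzero V) = vzero.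
Proof.
  assert (H : vadd (vscal a vzero) (vscal a vzero) = vadd (vscal a (@vzero V)) vzero).
  { rewrite <- vs_distv, !va_0r. reflexivity. }
  apply va_cancel_l in H. exact H.
Qed.

Lemma vs_opp a (x : V) : vscal a (vopp x) = vopp (vscal a x).
Proof. apply opp_unique. rewrite <- vs_distv, va_oppr. apply vs_z. Qed.

Lemma vs_sub a (x y : V) : vscal a (vsub x y) = vsub (vscal a x) (vscal a y).
Proof. unfold vsub. rewrite vs_distv, vs_opp. reflexivity. Qed.

Lemma vopp_m1 (x : V) : vopp x = vscal (mkC (-1) 0) x.
Proof.
  symmetry. apply opp_unique.
  rewrite <- (vs_1 x) at 1. rewrite <- vs_dists.
  replace (Cadd Defs.C1 (mkC (-1) 0)) with Defs.C0. apply vs_0.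
  unfold Cadd, Defs.C1, Defs.C0; simpl; f_equal; ring.
Qed.

Lemma vsub_add_distr (a b c d : V) : vsub (vadd a b) (vadd c d) = vadd (vsub a c) (vsub b d).
Proof. unfold vsub. rewrite vopp_add. apply va_sw. Qed.

End VS.

Lemma Cabs_real r : Cabs (mkC r 0) = Rabs r.
Proof. unfold Cabs; simpl. replace (r * r + 0 * 0) with (Rsqr r) by (unfold Rsqr; ring). apply sqrt_Rsqr_abs. Qed.

Section NS.
Context {V : CNormSp} {HV : VSp V} {HN : NSp V}.

Lemma n_ge0 (x : V) : 0 <= vnorm x.
Proof. apply HN. Qed.
Lemma n_def (x : V) : vnorm x = 0 -> x = vzero.
Proof. apply HN. Qed.
Lemma n_scal a (x : V) : vnorm (vscal a x) = Cabs a * vnorm x.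
Proof. apply HN. Qed.
Lemma n_tri (x y : V) : vnorm (vadd x y) <= vnorm x + vnorm y.
Proof. apply HN. Qed.

Lemma n_zero : vnorm (@vzero V) = 0.
Proof.
  rewrite <- (vs_0 vzero), n_scal. unfold Defs.C0. rewrite Cabs_real, Rabs_R0. ring.
Qed.

Lemma n_opp (x : V) : vnorm (vopp x) = vnorm x.
Proof. rewrite (vopp_m1), n_scal, Cabs_real. replace (Rabs (-1)) with 1 by (unfold Rabs; destruct Rcase_abs; lra). ring. Qed.

Lemma vsub_swap (x y : V) : vsub y x = vopp (vsub x y).
Proof. unfold vsub. rewrite (vopp_add), (vopp_opp), (va_comm). reflexivity. Qed.

Lemma n_sub_sym (x y : V) : vnorm (vsub x y) = vnorm (vsub y x).
Proof. rewrite (vsub_swap x y), n_opp. reflexivity. Qed.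

Lemma n_tri_sub (x y z : V) : vnorm (vsub x z) <= vnorm (vsub x y) + vnorm (vsub y z).
Proof.
  replace (vsub x z) with (vadd (vsub x y) (vsub y z)). apply n_tri.
  unfold vsub. rewrite <- (va_assoc), (va_assoc (vopp y)), (va_oppl), (va_0l). reflexivity.
Qed.

Lemma n_sub_le (x y : V) : vnorm x <= vnorm (vsub x y) + vnorm y.
Proof.
  rewrite <- (vsub_add_cancel x y) at 1. apply n_tri.
Qed.

Lemma n_sub_le2 (x y : V) : vnorm (vsub x y) <= vnorm x + vnorm y.
Proof. unfold vsub. rewrite <- (n_opp y). apply n_tri. Qed.

Lemma n_eq0 (x : V) : vnorm x <= 0 -> x = vzero.
Proof. intro H. apply n_def. pose proof (n_ge0 x). lra. Qed.

End NS.

Definition additive {V W : CNormSp} (f : V -> W) := forall x y, f (vadd x y) = vadd (f x) (f y).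
Definition bnd {V W : CNormSp} (f : V -> W) (K : R) := forall x, vnorm (f x) <= K * vnorm x.

Section Lin.
Context {V W : CNormSp} {HV : VSp V} {HW : VSp W}.

Lemma add_0 (f : V -> W) : additive f -> f vzero = vzero.
Proof.
  intro Hf. apply (va_cancel_l (f vzero)). rewrite <- Hf, !va_0r; auto.
Qed.

Lemma add_opp (f : V -> W) : additive f -> forall x, f (vopp x) = vopp (f x).
Proof. intros Hf x. apply (opp_unique). rewrite <- Hf, va_oppr; auto. apply add_0; auto. Qed.

Lemma add_sub (f : V -> W) : additive f -> forall x y, f (vsub x y) = vsub (f x) (f y).
Proof. intros Hf x y. unfold vsub. rewrite Hf, add_opp; auto. Qed.

Lemma bl_add_ (f : V -> W) : bounded_linear f -> additive f.
Proof. intro H; unfold additive; apply H. Qed.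
Lemma bl_scal_ (f : V -> W) : bounded_linear f -> forall a x, f (vscal a x) = vscal a (f x).
Proof. intro H; unfold additive; apply H. Qed.

Lemma bl_0 (f : V -> W) : bounded_linear f -> f vzero = vzero.
Proof. intro H. apply add_0, bl_add_, H. Qed.
Lemma bl_opp (f : V -> W) : bounded_linear f -> forall x, f (vopp x) = vopp (f x).
Proof. intro H. apply add_opp, bl_add_, H. Qed.
Lemma bl_sub (f : V -> W) : bounded_linear f -> forall x y, f (vsub x y) = vsub (f x) (f y).
Proof. intro H. apply add_sub, bl_add_, H. Qed.
Lemma bl_addv (f : V -> W) : bounded_linear f -> forall x y, f (vadd x y) = vadd (f x) (f y).
Proof. intro H. apply H. Qed.

Context {HNV : NSp V} {HNW : NSp W}.

Lemma bl_bnd (f : V -> W) : bounded_linear f -> exists K, 0 <= K /\ bnd f K.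
Proof.
  intros [_ [_ [K HK]]]. exists (Rmax K 0). split. apply Rmax_r.
  intro x. eapply Rle_trans. apply HK. apply Rmult_le_compat_r. apply (n_ge0). apply Rmax_l.
Qed.

Lemma bnd_mono (f : V -> W) K K' : bnd f K -> K <= K' -> bnd f K'.
Proof. intros H HK x. eapply Rle_trans. apply H. apply Rmult_le_compat_r. apply (n_ge0). auto. Qed.

End Lin.

Section Comb.
Context {U V W : CNormSp} {HU : VSp U} {HV : VSp V} {HW : VSp W}
  {HNU : NSp U} {HNV : NSp V} {HNW : NSp W}.

Lemma bl_comp (f : V -> W) (g : U -> V) : bounded_linear f -> bounded_linear g ->
  bounded_linear (fun x => f (g x)).
Proof.
  intros Hf Hg. destruct (bl_bnd f Hf) as [K1 [K1p H1]]. destruct (bl_bnd g Hg) as [K2 [K2p H2]].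
  repeat split.
  - intros x y. rewrite (bl_addv g Hg), (bl_addv f Hf). auto.
  - intros a x. rewrite (bl_scal_ g Hg), (bl_scal_ f Hf). auto.
  - exists (K1 * K2). intro x. eapply Rle_trans. apply H1. rewrite Rmult_assoc. apply Rmult_le_compat_l; auto.
Qed.

Lemma bnd_comp (f : V -> W) (g : U -> V) K1 K2 : 0 <= K1 -> bnd f K1 -> bnd g K2 -> bnd (fun x => f (g x)) (K1 * K2).
Proof. intros Kp H1 H2 x. eapply Rle_trans. apply H1. rewrite Rmult_assoc. apply Rmult_le_compat_l; auto. Qed.

End Comb.

Section Comb2.
Context {V W : CNormSp} {HV : VSp V} {HW : VSp W}
  {HNV : NSp V} {HNW : NSp W}.

Lemma bl_id : bounded_linear (fun x : V => x).
Proof. repeat split; auto. exists 1. intro; lra. Qed.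

Lemma bl_zero : bounded_linear (fun _ : V => (@vzero W)).
Proof. repeat split.
  - intros. rewrite (va_0r). auto.
  - intros. rewrite (vs_z). auto.
  - exists 0. intro. rewrite (n_zero). lra.
Qed.

Lemma bl_plus (f g : V -> W) : bounded_linear f -> bounded_linear g ->
  bounded_linear (fun x => vadd (f x) (g x)).
Proof.
  intros Hf Hg. destruct (bl_bnd f Hf) as [K1 [K1p H1]]. destruct (bl_bnd g Hg) as [K2 [K2p H2]].
  repeat split.
  - intros x y. rewrite (bl_addv f Hf), (bl_addv g Hg). apply (va_sw).
  - intros a x. rewrite (bl_scal_ g Hg), (bl_scal_ f Hf), (vs_distv). auto.
  - exists (K1 + K2). intro x. eapply Rle_trans. apply (n_tri). specialize (H1 x). specialize (H2 x). lra.
Qed.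

Lemma bl_neg (f : V -> W) : bounded_linear f -> bounded_linear (fun x => vopp (f x)).
Proof.
  intros Hf. destruct (bl_bnd f Hf) as [K1 [K1p H1]].
  repeat split.
  - intros x y. rewrite (bl_addv f Hf), (vopp_add). auto.
  - intros a x. rewrite (bl_scal_ f Hf), (vs_opp). auto.
  - exists K1. intro x. rewrite (n_opp). apply H1.
Qed.

Lemma bl_minus (f g : V -> W) : bounded_linear f -> bounded_linear g ->
  bounded_linear (fun x => vsub (f x) (g x)).
Proof. intros. unfold vsub. apply bl_plus; auto. apply bl_neg; auto. Qed.

Lemma bnd_plus (f g : V -> W) K1 K2 : bnd f K1 -> bnd g K2 -> bnd (fun x => vadd (f x) (g x)) (K1 + K2).
Proof. intros H1 H2 x. eapply Rle_trans. apply (n_tri). specialize (H1 x). specialize (H2 x). lra. Qed.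

Lemma bnd_minus (f g : V -> W) K1 K2 : bnd f K1 -> bnd g K2 -> bnd (fun x => vsub (f x) (g x)) (K1 + K2).
Proof. intros H1 H2 x. eapply Rle_trans. apply (n_sub_le2). specialize (H1 x). specialize (H2 x). lra. Qed.

End Comb2.

Lemma oppow_S' {V : CNormSp} n (T : V -> V) x : oppow (S n) T x = oppow n T (T x).
Proof. induction n; simpl; auto. simpl in IHn. rewrite IHn. auto. Qed.

Lemma oppow_add {V : CNormSp} m n (T : V -> V) x : oppow (m + n) T x = oppow m T (oppow n T x).
Proof. induction m; simpl; auto. rewrite IHm. auto. Qed.

Lemma oppow_mul {V : CNormSp} m n (T : V -> V) x : oppow (m * n) T x = oppow m (oppow n T) x.
Proof. induction m; simpl; auto. rewrite oppow_add, IHm. auto. Qed.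

Lemma oppow_ext {V : CNormSp} n (T T' : V -> V) : (forall x, T x = T' x) -> forall x, oppow n T x = oppow n T' x.
Proof. intros H x. induction n; simpl; auto. rewrite IHn, H. auto. Qed.

Lemma oppow_comm {V : CNormSp} n (T S : V -> V) : (forall x, T (S x) = S (T x)) -> forall x, oppow n T (S x) = S (oppow n T x).
Proof. intros H x. induction n; simpl; auto. rewrite IHn, H. auto. Qed.

Section Pow.
Context {V : CNormSp} {HV : VSp V} {HNV : NSp V}.

Lemma oppow_bl n (T : V -> V) : bounded_linear T -> bounded_linear (oppow n T).
Proof.
  intro HT. induction n; simpl.
  - apply bl_id.
  - apply bl_comp; auto.
Qed.

Lemma oppow_bnd n (T : V -> V) K : 0 <= K -> bnd T K -> bnd (oppow n T) (K ^ n).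
Proof.
  intros Kp HT. induction n; simpl.
  - intro x. lra.
  - apply bnd_comp; auto.
Qed.
End Pow.

Definition qn' {V : CNormSp} (T : V -> V) :=
  forall eps, 0 < eps -> exists K, 0 <= K /\ forall n x, vnorm (oppow n T x) <= K * eps ^ n * vnorm x.

Lemma INR_le_2pow n : INR n <= 2 ^ n.
Proof. induction n. simpl; lra. rewrite S_INR. simpl. assert (1 <= 2 ^ n) by (apply pow_R1_Rle; lra). lra. Qed.

Lemma Rpower_le_base r y a : 0 < r -> r <= y -> 0 <= a -> Rpower r a <= Rpower y a.
Proof.
  intros Hr Hy Ha. unfold Rpower. destruct (Rle_lt_or_eq_dec _ _ Hy) as [H|H].
  - destruct (Rle_lt_or_eq_dec _ _ Ha) as [H2|H2].
    + left. apply exp_increasing. apply Rmult_lt_compat_l; auto. apply ln_increasing; auto.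
    + subst. rewrite !Rmult_0_l. lra.
  - subst. lra.
Qed.

Lemma nroot_le n r y : (1 <= n)%nat -> 0 <= r -> 0 < y -> r <= y ^ n -> nroot n r <= y.
Proof.
  intros Hn Hr Hy Hry. unfold nroot. destruct (Rlt_dec 0 r); [|lra].
  apply Rle_trans with (Rpower (y ^ n) (/ INR n)). apply Rpower_le_base; auto.
  left. apply Rinv_0_lt_compat. apply lt_0_INR. lia.
  rewrite <- Rpower_pow by auto. rewrite Rpower_mult.
  rewrite Rinv_r. rewrite Rpower_1; lra. apply not_0_INR. lia.
Qed.

Lemma nroot_ge0 n r : 0 <= nroot n r.
Proof. unfold nroot. destruct (Rlt_dec 0 r). unfold Rpower. left; apply exp_pos. lra. Qed.

Lemma pow_lt_mono x y n : 0 <= x -> x < y -> (1 <= n)%nat -> x ^ n < y ^ n.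
Proof.
  intros H0 H1 Hn. induction n. lia. destruct n. simpl; lra.
  assert (IH : x ^ S n < y ^ S n) by (apply IHn; lia).
  change (x * x ^ S n < y * y ^ S n). assert (0 <= x ^ S n) by (apply pow_le; auto).
  apply Rle_lt_trans with (x * y ^ S n). apply Rmult_le_compat_l; lra.
  apply Rmult_lt_compat_r. apply pow_lt; lra. auto.
Qed.

Lemma nroot_lt n r y : (1 <= n)%nat -> 0 < y -> nroot n r < y -> r < y ^ n.
Proof.
  intros Hn Hy H. unfold nroot in H. destruct (Rlt_dec 0 r) as [Hr|Hr].
  - assert (E : r = Rpower (Rpower r (/ INR n)) (INR n)).
    { rewrite Rpower_mult, Rinv_l. rewrite Rpower_1; auto. apply not_0_INR; lia. }
    rewrite E. rewrite Rpower_pow by (unfold Rpower; apply exp_pos).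
    apply pow_lt_mono; auto. unfold Rpower; left; apply exp_pos.
  - assert (0 < y ^ n) by (apply pow_lt; auto). lra.
Qed.

Lemma finite_bound (f : nat -> R) N : exists K, 0 <= K /\ forall n, (n < N)%nat -> f n <= K.
Proof.
  induction N.
  - exists 0. split. lra. intros; lia.
  - destruct IHN as [K [Kp HK]]. exists (Rmax K (f N)). split.
    eapply Rle_trans; [apply Kp| apply Rmax_l].
    intros n Hn. destruct (Nat.eq_dec n N). subst; apply Rmax_r.
    eapply Rle_trans; [apply HK; lia | apply Rmax_l].
Qed.

Section QN.
Context {V : CNormSp} {HV : VSp V} {HN : NSp V}.

Lemma qn'_qn (T : V -> V) : qn' T -> quasinilpotent T.
Proof.
  intros Hq.
  set (E := fun n c => exists x : V, vnorm x <= 1 /\ c = vnorm (oppow n T x)).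
  assert (Hb : forall n, bound (E n)).
  { intro n. destruct (Hq 1 Rlt_0_1) as [K [Kp HK]]. exists K. intros c [x [Hx ->]].
    eapply Rle_trans. apply HK. rewrite pow1, Rmult_1_r.
    rewrite <- (Rmult_1_r K) at 2. apply Rmult_le_compat_l; auto. }
  assert (Hne : forall n, exists c, E n c).
  { intro n. exists (vnorm (oppow n T vzero)). exists vzero. split; auto. rewrite (n_zero). lra. }
  exists (fun n => proj1_sig (completeness (E n) (Hb n) (Hne n))). split.
  - intro n. exact (proj2_sig (completeness (E n) (Hb n) (Hne n))).
  - intros e He. destruct (Hq (e / 4)) as [K [Kp HK]]. lra.
    destruct (INR_unbounded K) as [N HN0]. exists (S N). intros n Hn.
    destruct (completeness (E n) (Hb n) (Hne n)) as [r Hr]. simpl.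
    assert (Hr0 : 0 <= r).
    { destruct (Hne n) as [c Hc]. eapply Rle_trans; [|apply (proj1 Hr); exact Hc].
      destruct Hc as [x [_ ->]]. apply (n_ge0). }
    assert (Hr1 : r <= (e / 2) ^ n).
    { apply (proj2 Hr). intros c [x [Hx ->]]. eapply Rle_trans. apply HK.
      assert (HK2 : K <= 2 ^ n). { eapply Rle_trans. left. apply HN0. eapply Rle_trans; [|apply INR_le_2pow].
        apply le_INR. lia. }
      replace ((e/2)^n) with (2^n * (e/4)^n * 1).
      apply Rmult_le_compat. apply Rmult_le_pos; auto. apply pow_le; lra. apply (n_ge0).
      apply Rmult_le_compat_r; auto. apply pow_le; lra. auto.
      rewrite Rmult_1_r, <- Rpow_mult_distr. f_equal. lra. }
    unfold R_dist. rewrite Rminus_0_r, Rabs_right by (apply Rle_ge, nroot_ge0).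
    apply Rle_lt_trans with (e/2). apply nroot_le; auto; try lia; lra. lra.
Qed.

Lemma opnorm_bound (S : V -> V) r : bounded_linear S -> is_opnorm S r -> forall x, vnorm (S x) <= r * vnorm x.
Proof.
  intros HS [Hub _] x.
  destruct (Req_dec (vnorm x) 0) as [H0|H0].
  - apply (n_def) in H0. subst. rewrite (bl_0 S HS), (n_zero). lra.
  - assert (Hx : 0 < vnorm x) by (pose proof (n_ge0 x); lra).
    set (c := / vnorm x).
    assert (Hc : 0 < c) by (apply Rinv_0_lt_compat; auto).
    assert (H1 : vnorm (S (vscal (mkC c 0) x)) <= r).
    { apply Hub. exists (vscal (mkC c 0) x). split; auto. rewrite (n_scal), Cabs_real, Rabs_right by lra.
      unfold c. rewrite Rinv_l; lra. }
    rewrite (bl_scal_ S HS), (n_scal), Cabs_real, Rabs_right in H1 by lra.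
    unfold c in H1. apply Rmult_le_compat_r with (r := vnorm x) in H1; [|lra].
    rewrite Rmult_comm, <- Rmult_assoc, Rinv_r in H1; lra.
Qed.

Lemma qn_qn' (T : V -> V) : bounded_linear T -> quasinilpotent T -> qn' T.
Proof.
  intros HT [u [Hu Hc]] eps Heps.
  destruct (Hc eps Heps) as [N HN0].
  destruct (finite_bound (fun n => u n / eps ^ n) (S N)) as [K [Kp HK]].
  exists (Rmax K 1). split. eapply Rle_trans; [apply Kp|apply Rmax_l].
  intros n x. eapply Rle_trans. apply (opnorm_bound _ _ (oppow_bl n T HT) (Hu n)).
  apply Rmult_le_compat_r. apply (n_ge0).
  assert (Hp : 0 < eps ^ n) by (apply pow_lt; auto).
  destruct (Compare_dec.le_lt_dec (S N) n) as [Hn|Hn].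
  - specialize (HN0 n ltac:(lia)). unfold R_dist in HN0. rewrite Rminus_0_r in HN0.
    apply Rle_lt_trans with (r1 := nroot n (u n)) in HN0; [|apply Rle_abs].
    apply nroot_lt in HN0; auto; [|lia]. assert (1 <= Rmax K 1) by apply Rmax_r.
    left. eapply Rlt_le_trans. apply HN0. rewrite <- (Rmult_1_l (eps ^ n)) at 1. apply Rmult_le_compat_r; lra.
  - specialize (HK n Hn). simpl in HK.
    replace (u n) with (u n / eps ^ n * eps ^ n) by (field; lra).
    apply Rmult_le_compat_r. lra. eapply Rle_trans; [apply HK|apply Rmax_l].
Qed.

End QN.

Definition gd {V : CNormSp} (a x : V -> V) :=
  bounded_linear x /\ (forall v, x (a (x v)) = x v) /\ (forall v, a (x v) = x (a v)) /\
  qn' (fun v => vsub (a v) (a (a (x v)))).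

Definition Ban (V : CNormSp) := is_CVectorSpace V /\ is_CNorm V.

Lemma has_ext {V : CNormSp} (a b : V -> V) : has_gDrazin a -> (forall v, a v = b v) -> has_gDrazin b.
Proof. intros H E. replace b with a; auto. apply functional_extensionality; auto. Qed.

Section GD.
Context {V : CNormSp} {HV : VSp V} {HN : NSp V}.

Lemma gd_has (a x : V -> V) : gd a x -> has_gDrazin a.
Proof. intros [H1 [H2 [H3 H4]]]. exists x. split; [|split; [|split]]; auto. apply qn'_qn; auto. Qed.

Lemma has_gd (a : V -> V) : bounded_linear a -> has_gDrazin a -> exists x, gd a x.
Proof.
  intros Ha [x [H1 [H2 [H3 H4]]]]. exists x. split; [|split; [|split]]; auto.
  apply qn_qn'; auto. apply bl_minus; auto. apply bl_comp; auto. apply bl_comp; auto.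
Qed.

Section Pi.
Context (a x : V -> V) (Ha : bounded_linear a) (Hg : gd a x).

Definition pi_ v := vsub v (a (x v)).

Lemma gd_bl : bounded_linear x. Proof. apply Hg. Qed.
Lemma gd_xax v : x (a (x v)) = x v. Proof. apply Hg. Qed.
Lemma gd_comm v : a (x v) = x (a v). Proof. apply Hg. Qed.
Lemma gd_qn : qn' (fun v => vsub (a v) (a (a (x v)))). Proof. apply Hg. Qed.

Lemma gd_xxa v : x (x (a v)) = x v.
Proof. rewrite <- gd_comm. apply gd_xax. Qed.

Lemma gd_axax v : a (x (a (x v))) = a (x v).
Proof. rewrite gd_xax. auto. Qed.

Lemma pi_bl : bounded_linear pi_.
Proof. unfold pi_. apply bl_minus; auto. apply bl_id. apply bl_comp; auto. apply gd_bl. Qed.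

Lemma x_pi v : x (pi_ v) = vzero.
Proof. unfold pi_. rewrite (bl_sub _ gd_bl), gd_xax. apply vsub_self; auto. Qed.

Lemma ax_pi v : a (x (pi_ v)) = vzero.
Proof. rewrite x_pi. apply (bl_0 _ Ha). Qed.

Lemma pi_pi v : pi_ (pi_ v) = pi_ v.
Proof. unfold pi_ at 1. rewrite ax_pi. apply vsub_0r; auto. Qed.

Lemma pi_a v : pi_ (a v) = a (pi_ v).
Proof. unfold pi_. rewrite (bl_sub _ Ha). f_equal. rewrite (gd_comm v). auto. Qed.

Lemma pi_x v : pi_ (x v) = vzero.
Proof. unfold pi_. rewrite (gd_comm (x v)), gd_xax. apply vsub_self; auto. Qed.

Lemma q_eq v : vsub (a v) (a (a (x v))) = a (pi_ v).
Proof. unfold pi_. rewrite (bl_sub _ Ha). auto. Qed.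

Lemma pi_ax v : pi_ (a (x v)) = vzero.
Proof. rewrite gd_comm, pi_x. auto. Qed.

End Pi.
End GD.

Section Cline.
Context {V W : CNormSp} {HV : VSp V} {HNV : NSp V} {HW : VSp W} {HNW : NSp W}.

Lemma cline (f : V -> W) (g : W -> V) : bounded_linear f -> bounded_linear g ->
  has_gDrazin (fun v => g (f v)) -> has_gDrazin (fun w => f (g w)).
Proof.
  intros Hf Hg H.
  assert (Hh : bounded_linear (fun v => g (f v))) by (apply bl_comp; auto).
  destruct (has_gd _ Hh H) as [r Hr].
  pose proof (gd_bl _ _ Hr) as Hrb.
  assert (Hc : forall v, g (f (r v)) = r (g (f v))) by (apply (gd_comm _ _ Hr)).
  assert (Hx : forall v, r (g (f (r v))) = r v) by (apply (gd_xax _ _ Hr)).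
  assert (L1 : forall v, g (f (r (r v))) = r v) by (intro v; rewrite Hc, Hx; auto).
  apply gd_has with (x := fun w => f (r (r (g w)))).
  split; [|split; [|split]].
  - apply bl_comp; auto. apply bl_comp; auto. apply bl_comp; auto.
  - intro w. simpl. rewrite L1, Hx. auto.
  - intro w. simpl. rewrite L1, <- Hc, Hx. auto.
  - set (pi := pi_ (fun v => g (f v)) r).
    assert (Hpi : bounded_linear pi) by (apply pi_bl; auto).
    set (q := fun v => vsub (g (f v)) (g (f (g (f (r v)))))).
    assert (Hq : qn' q) by (apply (gd_qn _ _ Hr)).
    assert (Ez : forall w, vsub (f (g w)) (f (g (f (g (f (r (r (g w)))))))) = f (pi (g w))).
    { intro w. rewrite L1. unfold pi, pi_. rewrite (bl_sub _ Hf). auto. }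
    assert (Epq : forall u, pi (g (f u)) = q u).
    { intro u. unfold pi, pi_, q. rewrite <- Hc. auto. }
    set (z := fun w => vsub (f (g w)) (f (g (f (g (f (r (r (g w))))))))).
    assert (Ep : forall n w, oppow (S n) z w = f (oppow n q (pi (g w)))).
    { induction n; intro w. simpl. apply Ez. change (oppow (S (S n)) z w) with (z (oppow (S n) z w)).
      rewrite IHn. unfold z at 1. rewrite Ez, Epq. auto. }
    destruct (bl_bnd f Hf) as [Kf [Kfp Hf']].
    destruct (bl_bnd g Hg) as [Kg [Kgp Hg']].
    destruct (bl_bnd pi Hpi) as [Kp [Kpp Hp']].
    intros eps Heps. destruct (Hq eps Heps) as [K [Kp0 HK]].
    exists (1 + Kf * K * Kp * Kg / eps). split.
    { assert (0 <= Kf * K * Kp * Kg / eps). { unfold Rdiv. repeat apply Rmult_le_pos; auto. left; apply Rinv_0_lt_compat; auto. } lra. }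
    intros n w. change (vnorm (oppow n z w) <= (1 + Kf * K * Kp * Kg / eps) * eps ^ n * vnorm w).
    destruct n.
    + simpl. pose proof (n_ge0 w). assert (0 <= Kf * K * Kp * Kg / eps). { unfold Rdiv. repeat apply Rmult_le_pos; auto. left; apply Rinv_0_lt_compat; auto. } nra.
    + rewrite Ep.
      assert (A1: vnorm (pi (g w)) <= Kp*(Kg*vnorm w)) by (eapply Rle_trans; [apply Hp'| apply Rmult_le_compat_l; auto]).
      assert (A2: vnorm (oppow n q (pi (g w))) <= K*eps^n*(Kp*(Kg*vnorm w))).
      { eapply Rle_trans; [apply HK| apply Rmult_le_compat_l; [apply Rmult_le_pos; auto; apply pow_le; lra | auto]]. }
      assert (A3: vnorm (f (oppow n q (pi (g w)))) <= Kf*(K*eps^n*(Kp*(Kg*vnorm w)))).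
      { eapply Rle_trans; [apply Hf'| apply Rmult_le_compat_l; auto]. }
      eapply Rle_trans; [apply A3|].
      simpl. pose proof (n_ge0 w). assert (0 < eps ^ n) by (apply pow_lt; auto).
      assert (E : Kf * (K * eps ^ n * (Kp * (Kg * vnorm w))) = (Kf * K * Kp * Kg / eps) * (eps * eps ^ n) * vnorm w) by (field; lra).
      rewrite E. apply Rmult_le_compat_r; auto. apply Rmult_le_compat_r. apply Rmult_le_pos; lra. lra.
Qed.

End Cline.

Lemma frac_le1 k : 0 <= k -> 0 <= k / (k + 1) <= 1.
Proof.
  intro H. split. apply Rmult_le_pos; auto. left; apply Rinv_0_lt_compat; lra.
  apply Rmult_le_reg_r with (k + 1). lra. unfold Rdiv. rewrite Rmult_assoc, Rinv_l; lra.
Qed.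

Section Van.
Context {V : CNormSp} {HV : VSp V} {HN : NSp V}.

Lemma vanish (u : V) C r : 0 <= r < 1 -> (forall n, vnorm u <= C * r ^ n) -> u = vzero.
Proof.
  intros Hr H. apply n_eq0. destruct (Rle_lt_dec (vnorm u) 0) as [h|h]; auto.
  destruct (pow_lt_1_zero r ltac:(rewrite Rabs_right; lra) (vnorm u / (Rabs C + 1))) as [N HN0].
  { apply Rdiv_lt_0_compat; auto. pose proof (Rabs_pos C); lra. }
  specialize (HN0 N (Nat.le_refl N)). specialize (H N).
  assert (C * r ^ N <= Rabs C * Rabs (r ^ N)).
  { rewrite <- Rabs_mult. apply Rle_abs. }
  assert (Rabs C * Rabs (r ^ N) <= Rabs C * (vnorm u / (Rabs C + 1))).
  { apply Rmult_le_compat_l. apply Rabs_pos. lra. }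
  assert (Rabs C * (vnorm u / (Rabs C + 1)) < vnorm u).
  { pose proof (Rabs_pos C). apply Rmult_lt_reg_r with (Rabs C + 1). lra.
    field_simplify; try lra. }
  lra.
Qed.

End Van.

Section Uniq.
Context {V W : CNormSp} {HV : VSp V} {HNV : NSp V} {HW : VSp W} {HNW : NSp W}.

Lemma syl_uniq_r (D : V -> W) (G : W -> W) (H : V -> V) :
  bounded_linear D -> bounded_linear G -> qn' H ->
  (forall v, D v = G (D (H v))) -> forall v, D v = vzero.
Proof.
  intros HD HG HH E v.
  destruct (bl_bnd D HD) as [Kd [Kdp HKd]]. destruct (bl_bnd G HG) as [Kg [Kgp HKg]].
  destruct (HH (/ (2 * (Kg + 1)))) as [K [Kp HK]]. apply Rinv_0_lt_compat; lra.
  assert (Ei : forall n v, D v = oppow n G (D (oppow n H v))).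
  { induction n; intro v'; simpl; auto. rewrite (IHn v') at 1. rewrite (E (oppow n H v')) at 1. apply oppow_comm. auto. }
  apply (vanish _ (Kd * K * vnorm v) (/2)). split. lra. lra.
  intro n. rewrite (Ei n v).
  eapply Rle_trans. apply (oppow_bnd n G Kg Kgp HKg).
  eapply Rle_trans. apply Rmult_le_compat_l. apply pow_le; auto. apply HKd.
  eapply Rle_trans. apply Rmult_le_compat_l. apply pow_le; auto. apply Rmult_le_compat_l. auto. apply HK.
  assert (E2 : Kg ^ n * (Kd * (K * (/ (2 * (Kg + 1))) ^ n * vnorm v)) =
     Kd * K * vnorm v * ((Kg / (Kg + 1)) ^ n * (/2) ^ n)).
  { rewrite Rinv_mult, Rpow_mult_distr. unfold Rdiv. rewrite Rpow_mult_distr. ring. }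
  rewrite E2. apply Rmult_le_compat_l. pose proof (n_ge0 v). apply Rmult_le_pos; auto. apply Rmult_le_pos; auto.
  rewrite <- (Rmult_1_l ((/2)^n)) at 2. apply Rmult_le_compat_r. apply pow_le; lra.
  apply Rle_trans with (1 ^ n). apply pow_incr. apply frac_le1; auto. rewrite pow1; lra.
Qed.

Lemma syl_uniq_l (D : V -> W) (G : W -> W) (H : V -> V) :
  bounded_linear D -> bounded_linear H -> qn' G ->
  (forall v, D v = G (D (H v))) -> forall v, D v = vzero.
Proof.
  intros HD HH HG E v.
  destruct (bl_bnd D HD) as [Kd [Kdp HKd]]. destruct (bl_bnd H HH) as [Kh [Khp HKh]].
  destruct (HG (/ (2 * (Kh + 1)))) as [K [Kp HK]]. apply Rinv_0_lt_compat; lra.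
  assert (Ei : forall n v, D v = oppow n G (D (oppow n H v))).
  { induction n; intro v'; simpl; auto. rewrite (IHn v') at 1. rewrite (E (oppow n H v')) at 1. apply oppow_comm. auto. }
  apply (vanish _ (Kd * K * vnorm v) (/2)). split. lra. lra.
  intro n. rewrite (Ei n v).
  eapply Rle_trans. apply HK.
  eapply Rle_trans. apply Rmult_le_compat_l. apply Rmult_le_pos; auto. apply pow_le. left; apply Rinv_0_lt_compat; lra. apply HKd.
  eapply Rle_trans. apply Rmult_le_compat_l. apply Rmult_le_pos; auto. apply pow_le. left; apply Rinv_0_lt_compat; lra.
  apply Rmult_le_compat_l. auto. apply (oppow_bnd n H Kh Khp HKh).
  assert (E2 : K * (/ (2 * (Kh + 1))) ^ n * (Kd * (Kh ^ n * vnorm v)) =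
     Kd * K * vnorm v * ((Kh / (Kh + 1)) ^ n * (/2) ^ n)).
  { rewrite Rinv_mult, Rpow_mult_distr. unfold Rdiv. rewrite Rpow_mult_distr. ring. }
  rewrite E2. apply Rmult_le_compat_l. pose proof (n_ge0 v). apply Rmult_le_pos; auto. apply Rmult_le_pos; auto.
  rewrite <- (Rmult_1_l ((/2)^n)) at 2. apply Rmult_le_compat_r. apply pow_le; lra.
  apply Rle_trans with (1 ^ n). apply pow_incr. apply frac_le1; auto. rewrite pow1; lra.
Qed.

End Uniq.

Section P3.
Context {V : CNormSp} {HV : VSp V} {HN : NSp V}.

Lemma oppow3 n (k : V -> V) x : oppow n (fun v => k (k (k v))) x = oppow (n * 3) k x.
Proof. rewrite oppow_mul. apply oppow_ext. intro; reflexivity. Qed.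

Lemma qn'_pow3 (k : V -> V) : qn' k -> qn' (fun v => k (k (k v))).
Proof.
  intros Hk eps He. set (d := Rmin eps 1).
  assert (Hd : 0 < d) by (unfold d; apply Rmin_pos; lra).
  destruct (Hk d Hd) as [K [Kp HK]]. exists K. split; auto. intros n x.
  rewrite oppow3. eapply Rle_trans. apply HK. apply Rmult_le_compat_r. apply n_ge0.
  apply Rmult_le_compat_l; auto. rewrite Nat.mul_comm, pow_mult. apply pow_incr. split. apply pow_le; lra.
  assert (d <= 1) by apply Rmin_r. assert (d <= eps) by apply Rmin_l.
  simpl. rewrite Rmult_1_r. assert (d * d <= 1) by (rewrite <- (Rmult_1_r 1); apply Rmult_le_compat; lra).
  assert (d * (d * d) <= d * 1) by (apply Rmult_le_compat_l; lra). lra.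
Qed.

Lemma qn'_root3 (k : V -> V) L : 0 <= L -> bnd k L -> qn' (fun v => k (k (k v))) -> qn' k.
Proof.
  intros Lp HL Hk eps He. set (M := Rmax (L / eps) 1).
  assert (HM1 : 1 <= M) by apply Rmax_r.
  assert (HM2 : L <= M * eps).
  { apply Rle_trans with (L / eps * eps). right; field; lra. apply Rmult_le_compat_r; lra || apply Rmax_l. }
  destruct (Hk (eps ^ 3)) as [K [Kp HK]]. apply pow_lt; auto.
  exists (K * M ^ 2). split. apply Rmult_le_pos; auto. apply pow_le; lra.
  intros n x. pose proof (Nat.div_mod_eq n 3) as Hn. set (m := (n / 3)%nat) in *. set (r := (n mod 3)%nat) in *.
  assert (Hr : (r < 3)%nat) by (apply Nat.mod_upper_bound; lia).
  replace n with (r + m * 3)%nat by lia. rewrite oppow_add, <- oppow3.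
  eapply Rle_trans. apply (oppow_bnd r k L Lp HL).
  eapply Rle_trans. apply Rmult_le_compat_l. apply pow_le; auto. apply HK.
  rewrite pow_add, (Nat.mul_comm m 3), pow_mult.
  assert (A : L ^ r <= M ^ 2 * eps ^ r).
  { apply Rle_trans with ((M * eps) ^ r). apply pow_incr; lra. rewrite Rpow_mult_distr.
    apply Rmult_le_compat_r. apply pow_le; lra.
    apply Rle_pow; auto; lia. }
  assert (0 <= (eps ^ 3) ^ m) by (apply pow_le; apply pow_le; lra).
  pose proof (n_ge0 x).

  apply Rle_trans with ((M ^ 2 * eps ^ r) * (K * (eps ^ 3) ^ m * vnorm x)).
  apply Rmult_le_compat_r; auto. apply Rmult_le_pos; auto. apply Rmult_le_pos; auto.
  right. ring.
Qed.

End P3.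

Section Comm.
Context {V : CNormSp} {HV : VSp V} {HN : NSp V}.

Lemma gd_commute (g z t : V -> V) : bounded_linear g -> bounded_linear t -> gd g z ->
  (forall v, t (g v) = g (t v)) -> forall v, t (z v) = z (t v).
Proof.
  intros Hg Ht Hz Htg.
  pose proof (gd_bl _ _ Hz) as Hzb.
  assert (Hc : forall v, g (z v) = z (g v)) by apply (gd_comm _ _ Hz).
  assert (Hx : forall v, z (g (z v)) = z v) by apply (gd_xax _ _ Hz).
  set (pi := pi_ g z).
  assert (Hpi : bounded_linear pi) by (apply pi_bl; auto).
  assert (Hq : qn' (fun v => g (pi v))).
  { intros e He. destruct (gd_qn _ _ Hz e He) as [K [Kp HK]]. exists K. split; auto. intros n x.
    rewrite <- (HK n x). right. f_equal. apply oppow_ext. intro. symmetry. apply (q_eq g z Hg). }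
  assert (Hpp : forall v, pi (pi v) = pi v) by apply (pi_pi g z Hg Hz).
  assert (Hpg : forall v, pi (g v) = g (pi v)) by apply (pi_a g z Hg Hz).
  assert (Hzz : forall v, g (z (z v)) = z v) by (intro v; rewrite Hc, Hx; auto).
  assert (S1 : forall v, g (z (t (pi v))) = vzero).
  { apply (syl_uniq_r (fun v => g (z (t (pi v)))) z (fun v => g (pi v))).
    apply bl_comp; auto. apply bl_comp; auto. apply bl_comp; auto. auto. auto.
    intro v. rewrite Hpg, Hpp, Hx, Htg, Hc. auto. }
  assert (S2 : forall v, pi (t (g (z v))) = vzero).
  { apply (syl_uniq_l (fun v => pi (t (g (z v)))) (fun v => g (pi v)) z).
    apply bl_comp; auto. apply bl_comp; auto. apply bl_comp; auto. auto. auto.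
    intro v. rewrite Hpp, Hzz, Htg, Hpg. auto. }
  assert (Dec : forall u, u = vadd (g (z u)) (pi u)).
  { intro u. unfold pi, pi_. rewrite (va_comm (g (z u))). symmetry. apply vsub_add_cancel. }
  assert (T1 : forall v, t (g (z v)) = g (z (t (g (z v))))).
  { intro v. rewrite (Dec (t (g (z v)))) at 1. rewrite S2, va_0r. auto. }
  assert (T2 : forall v, g (z (t v)) = g (z (t (g (z v))))).
  { intro v. rewrite (Dec v) at 1. rewrite (bl_addv t Ht), (bl_addv z Hzb), (bl_addv g Hg), S1, va_0r. auto. }
  assert (T3 : forall v, t (g (z v)) = g (z (t v))) by (intro v; rewrite T1, (T2 v); auto).
  intro v. transitivity (g (z (t (z v)))).
  - rewrite <- (Hzz v) at 1. apply T3.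
  - symmetry. rewrite <- (Hx (t v)) at 1. rewrite <- (T3 v). rewrite Htg. rewrite <- Hc. auto.
Qed.

Lemma gd_root (t : V -> V) : bounded_linear t -> has_gDrazin (fun v => t (t (t v))) -> has_gDrazin t.
Proof.
  intros Ht H. set (g := fun v => t (t (t v))).
  assert (Hg : bounded_linear g) by (unfold g; repeat (apply bl_comp; auto)).
  destruct (has_gd g Hg H) as [z Hz].
  pose proof (gd_bl _ _ Hz) as Hzb.
  assert (Hc : forall v, t (z v) = z (t v)) by (apply (gd_commute g z t); auto).
  assert (Hx : forall v, z (g (z v)) = z v) by apply (gd_xax _ _ Hz).
  apply gd_has with (x := fun v => t (t (z v))). split; [|split; [|split]].
  - repeat (apply bl_comp; auto).
  - intro v. specialize (Hx v). unfold g in Hx. rewrite Hx. auto.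
  - intro v. rewrite <- Hc. auto.
  - set (pi := pi_ g z).
    assert (Hpi : bounded_linear pi) by (apply pi_bl; auto).
    assert (Hpp : forall v, pi (pi v) = pi v) by apply (pi_pi g z Hg Hz).
    assert (Hpt : forall v, pi (t v) = t (pi v)).
    { intro v. unfold pi, pi_, g. rewrite (bl_sub t Ht), <- Hc. auto. }
    assert (Ek : forall v, vsub (t v) (t (t (t (t (z v))))) = t (pi v)).
    { intro v. unfold pi, pi_, g. rewrite (bl_sub t Ht). auto. }
    destruct (bl_bnd (fun v => t (pi v))) as [L [Lp HL]]. apply bl_comp; auto.
    apply (qn'_root3 _ L Lp).
    + intro v. rewrite Ek. apply HL.
    + intros e He. destruct (gd_qn _ _ Hz e He) as [K [Kp HK]]. exists K. split; auto. intros n x.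
      rewrite <- (HK n x). right. f_equal. apply oppow_ext. intro u. rewrite !Ek, (q_eq g z Hg).
      rewrite !Hpt, !Hpp. unfold g. auto.
Qed.

Lemma gd_cube (a : V -> V) : bounded_linear a -> has_gDrazin a -> has_gDrazin (fun v => a (a (a v))).
Proof.
  intros Ha H. destruct (has_gd a Ha H) as [x Hx].
  pose proof (gd_bl _ _ Hx) as Hxb.
  assert (Hc : forall v, a (x v) = x (a v)) by apply (gd_comm _ _ Hx).
  assert (Hr : forall v, x (x (a v)) = x v) by apply (gd_xxa a x Hx).
  apply gd_has with (x := fun v => x (x (x v))). split; [|split; [|split]].
  - repeat (apply bl_comp; auto).
  - intro v. repeat rewrite Hc. repeat rewrite Hr. auto.
  - intro v. repeat rewrite Hc. auto.
  - set (pi := pi_ a x).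
    assert (Hpp : forall v, pi (pi v) = pi v) by apply (pi_pi a x Ha Hx).
    assert (Hpa : forall v, pi (a v) = a (pi v)) by apply (pi_a a x Ha Hx).
    assert (E : forall v, vsub (a (a (a v))) (a (a (a (a (a (a (x (x (x v))))))))) = a (pi (a (pi (a (pi v)))))).
    { intro v. rewrite !Hpa, !Hpp. unfold pi, pi_. rewrite !(bl_sub a Ha). repeat rewrite Hc. repeat rewrite Hr. auto. }
    intros e He. destruct (qn'_pow3 _ (gd_qn _ _ Hx) e He) as [K [Kp HK]]. exists K. split; auto. intros n v.
    rewrite <- (HK n v). right. f_equal. apply oppow_ext. intro u. rewrite E, !(q_eq a x Ha). auto.
Qed.

End Comm.

Class CSp (V : CNormSp) : Prop := csp_ax : is_complete V.

Section Prod.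
Context {V W : CNormSp} {HV : VSp V} {HNV : NSp V} {HW : VSp W} {HNW : NSp W}.

Lemma pair_eq (a c : V) (b d : W) : a = c -> b = d -> (a, b) = (c, d).
Proof. intros; subst; auto. Qed.

Global Instance prod_VSp : VSp (prodsp V W).
Proof.
  unfold VSp, is_CVectorSpace. simpl.
  split; [|split; [|split; [|split; [|split; [|split; [|split]]]]]]; intros;
  repeat match goal with p : _ * _ |- _ => destruct p end; simpl; apply pair_eq;
  try apply va_assoc; try apply va_comm; try apply va_0r; try apply va_oppr; try apply vs_1; try apply vs_mul;
  try apply vs_distv; try apply vs_dists.
Qed.

Global Instance prod_NSp : NSp (prodsp V W).
Proof.
  unfold NSp, is_CNorm. simpl. split; [|split; [|split]].
  - intros [a b]; simpl. pose proof (n_ge0 a). pose proof (n_ge0 b). lra.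
  - intros [a b]; simpl. intro H. pose proof (n_ge0 a). pose proof (n_ge0 b).
    apply pair_eq; apply n_eq0; lra.
  - intros c [a b]; simpl. rewrite !n_scal. ring.
  - intros [a b] [c d]; simpl. pose proof (n_tri a c). pose proof (n_tri b d). lra.
Qed.

Lemma prod_complete : is_complete V -> is_complete W -> is_complete (prodsp V W).
Proof.
  intros CV CW u Hu.
  destruct (CV (fun n => fst (u n))) as [l1 H1].
  { intros e He. destruct (Hu e He) as [N HN]. exists N. intros m n Hm Hn. specialize (HN m n Hm Hn).
    simpl in HN. pose proof (n_ge0 (vsub (snd (u m)) (snd (u n)))). unfold vsub in *. simpl in HN. lra. }
  destruct (CW (fun n => snd (u n))) as [l2 H2].
  { intros e He. destruct (Hu e He) as [N HN]. exists N. intros m n Hm Hn. specialize (HN m n Hm Hn).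
    simpl in HN. pose proof (n_ge0 (vsub (fst (u m)) (fst (u n)))). unfold vsub in *. simpl in HN. lra. }
  exists (l1, l2). intros e He.
  destruct (H1 (e/2)) as [N1 HN1]. lra. destruct (H2 (e/2)) as [N2 HN2]. lra.
  exists (max N1 N2). intros n Hn. specialize (HN1 n ltac:(lia)). specialize (HN2 n ltac:(lia)).
  unfold vsub in *. simpl. lra.
Qed.

Global Instance prod_CSp {CV : CSp V} {CW : CSp W} : CSp (prodsp V W).
Proof. apply prod_complete; auto. Qed.

Lemma bl_pair {U : CNormSp} {HU : VSp U} {HNU : NSp U} (f : U -> V) (g : U -> W) :
  bounded_linear f -> bounded_linear g -> bounded_linear (fun u => (f u, g u) : prodsp V W).
Proof.
  intros Hf Hg. destruct (bl_bnd f Hf) as [K1 [K1p H1]]. destruct (bl_bnd g Hg) as [K2 [K2p H2]].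
  split; [|split].
  - intros x y. simpl. rewrite (bl_addv f Hf), (bl_addv g Hg). auto.
  - intros a x. simpl. rewrite (bl_scal_ f Hf), (bl_scal_ g Hg). auto.
  - exists (K1 + K2). intro x. simpl. specialize (H1 x). specialize (H2 x). lra.
Qed.

Lemma bl_fst : bounded_linear (fun p : prodsp V W => fst p).
Proof. split; [|split]; auto. exists 1. intros [a b]; simpl. pose proof (n_ge0 b). lra. Qed.

Lemma bl_snd : bounded_linear (fun p : prodsp V W => snd p).
Proof. split; [|split]; auto. exists 1. intros [a b]; simpl. pose proof (n_ge0 a). lra. Qed.

End Prod.

Section Lim.
Context {W : CNormSp} {HW : VSp W} {HNW : NSp W}.

Definition lim (u : nat -> W) (l : W) :=
  forall eps, 0 < eps -> exists N, forall n, (N <= n)%nat -> vnorm (vsub (u n) l) < eps.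

Lemma lim_unique u l1 l2 : lim u l1 -> lim u l2 -> l1 = l2.
Proof.
  intros H1 H2. apply vsub_eq. apply n_eq0.
  apply Rnot_lt_le. intro Hp.
  destruct (H1 (vnorm (vsub l1 l2) / 2)) as [N1 HN1]. lra.
  destruct (H2 (vnorm (vsub l1 l2) / 2)) as [N2 HN2]. lra.
  specialize (HN1 (max N1 N2) ltac:(lia)). specialize (HN2 (max N1 N2) ltac:(lia)).
  pose proof (n_tri_sub l1 (u (max N1 N2)) l2). pose proof (n_sub_sym l1 (u (max N1 N2))). lra.
Qed.

Lemma lim_const l : lim (fun _ => l) l.
Proof. intros e He. exists O. intros. rewrite vsub_self, n_zero. auto. Qed.

Lemma lim_add u w l1 l2 : lim u l1 -> lim w l2 -> lim (fun n => vadd (u n) (w n)) (vadd l1 l2).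
Proof.
  intros H1 H2 e He. destruct (H1 (e/2)) as [N1 HN1]. lra. destruct (H2 (e/2)) as [N2 HN2]. lra.
  exists (max N1 N2). intros n Hn. rewrite vsub_add_distr. eapply Rle_lt_trans. apply n_tri.
  specialize (HN1 n ltac:(lia)). specialize (HN2 n ltac:(lia)). lra.
Qed.

Lemma lim_shift u l : lim u l -> lim (fun n => u (S n)) l.
Proof. intros H e He. destruct (H e He) as [N HN]. exists N. intros. apply HN. lia. Qed.

Lemma lim_ext u w l : (forall n, u n = w n) -> lim u l -> lim w l.
Proof. intros E H e He. destruct (H e He) as [N HN]. exists N. intros. rewrite <- E. auto. Qed.

Lemma lim_norm_le u l c : lim u l -> (forall n, vnorm (u n) <= c) -> vnorm l <= c.
Proof.
  intros H Hc. apply Rnot_lt_le. intro Hp. destruct (H (vnorm l - c)) as [N HN]. lra.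
  specialize (HN N (Nat.le_refl N)). pose proof (n_sub_le l (u N)). pose proof (n_sub_sym l (u N)).
  specialize (Hc N). lra.
Qed.

End Lim.

Section Lim2.
Context {V W : CNormSp} {HV : VSp V} {HNV : NSp V} {HW : VSp W} {HNW : NSp W}.

Lemma lim_bl (f : V -> W) u l : bounded_linear f -> lim u l -> lim (fun n => f (u n)) (f l).
Proof.
  intros Hf H e He. destruct (bl_bnd f Hf) as [K [Kp HK]].
  destruct (H (e / (K + 1))) as [N HN]. apply Rdiv_lt_0_compat; lra.
  exists N. intros n Hn. rewrite <- (bl_sub f Hf). eapply Rle_lt_trans. apply HK.
  specialize (HN n Hn). apply Rle_lt_trans with ((K + 1) * vnorm (vsub (u n) l)).
  apply Rmult_le_compat_r. apply n_ge0. lra.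
  apply Rmult_lt_reg_l with (/ (K + 1)). apply Rinv_0_lt_compat; lra.
  rewrite <- Rmult_assoc, Rinv_l, Rmult_1_l by lra. unfold Rdiv in HN. lra.
Qed.

End Lim2.

Section Series.
Context {V W : CNormSp} {HV : VSp V} {HNV : NSp V} {HW : VSp W} {HNW : NSp W} {CW : CSp W}.

Fixpoint psum (t : nat -> V -> W) (N : nat) (v : V) : W :=
  match N with O => vzero | S N' => vadd (psum t N' v) (t N' v) end.

Lemma psum_tail (t : nat -> V -> W) B v n k : 0 <= B -> (forall n v, vnorm (t n v) <= B * (/2) ^ n * vnorm v) ->
  vnorm (vsub (psum t (n + k) v) (psum t n v)) <= 2 * B * (/2) ^ n * (1 - (/2) ^ k) * vnorm v.
Proof.
  intros Bp Ht. induction k.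
  - rewrite Nat.add_0_r, vsub_self, n_zero. simpl. lra.
  - rewrite Nat.add_succ_r. simpl psum.
    replace (vsub (vadd (psum t (n + k) v) (t (n + k)%nat v)) (psum t n v)) with
      (vadd (vsub (psum t (n + k) v) (psum t n v)) (t (n + k)%nat v)).
    2:{ unfold vsub. rewrite <- !va_assoc. f_equal. apply va_comm. }
    eapply Rle_trans. apply n_tri. specialize (Ht (n + k)%nat v). rewrite pow_add in Ht.
    pose proof (n_ge0 v). simpl.
    assert (E : 2 * B * (/ 2) ^ n * (1 - / 2 * (/ 2) ^ k) * vnorm v =
               2 * B * (/ 2) ^ n * (1 - (/ 2) ^ k) * vnorm v + B * ((/ 2) ^ n * (/ 2) ^ k) * vnorm v) by field.
    rewrite E. lra.
Qed.

Lemma series_exists (t : nat -> V -> W) B : 0 <= B -> (forall n, bounded_linear (t n)) ->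
  (forall n v, vnorm (t n v) <= B * (/2) ^ n * vnorm v) ->
  exists S : V -> W, bounded_linear S /\ forall v, lim (fun N => psum t N v) (S v).
Proof.
  intros Bp Hb Ht.
  assert (Hl : forall v, exists l, lim (fun N => psum t N v) l).
  { intro v. apply CW. intros e He.
    destruct (pow_lt_1_zero (/2) ltac:(rewrite Rabs_right; lra) (e / (2 * B * vnorm v + 1))) as [N HN].
    { apply Rdiv_lt_0_compat; auto. pose proof (n_ge0 v). nra. }
    exists N. intros m n Hm Hn.
    assert (A : forall a b, (N <= a)%nat -> (a <= b)%nat -> vnorm (vsub (psum t b v) (psum t a v)) < e).
    { intros a b Ha Hab. replace b with (a + (b - a))%nat by lia. apply Rle_lt_trans with (2 * B * (/2)^a * (1 - (/2)^(a + (b-a) - a)) * vnorm v). replace (a + (b - a) - a)%nat with (b - a)%nat by lia. apply psum_tail; auto. replace (a + (b - a) - a)%nat with (b - a)%nat by lia.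
      specialize (HN a Ha). rewrite Rabs_right in HN by (apply Rle_ge, pow_le; lra).
      assert (0 <= (/2)^(b-a)) by (apply pow_le; lra). assert (0 <= (/2)^a) by (apply pow_le; lra).
      pose proof (n_ge0 v).
      apply Rle_lt_trans with ((2 * B * vnorm v + 1) * (/2)^a).
      assert (2 * B * (/2)^a * (1 - (/2)^(b-a)) * vnorm v <= 2 * B * (/2)^a * vnorm v).
      { assert (0 <= 2 * B * (/2)^a * vnorm v) by (repeat apply Rmult_le_pos; lra). nra. }
      nra.
      apply Rmult_lt_reg_l with (/ (2 * B * vnorm v + 1)). apply Rinv_0_lt_compat; nra.
      rewrite <- Rmult_assoc, Rinv_l, Rmult_1_l by nra. unfold Rdiv in HN. lra. }
    destruct (Nat.le_ge_cases m n).
    - rewrite n_sub_sym. apply A; auto.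
    - apply A; auto. }
  exists (fun v => proj1_sig (constructive_indefinite_description _ (Hl v))).
  set (S := fun v => proj1_sig (constructive_indefinite_description _ (Hl v))).
  assert (HS : forall v, lim (fun N => psum t N v) (S v)).
  { intro v. unfold S. exact (proj2_sig (constructive_indefinite_description _ (Hl v))). }
  split; [|exact HS]. fold S.
  split; [|split].
  - intros x y. apply (lim_unique (fun N => psum t N (vadd x y))); auto.
    apply lim_ext with (u := fun N => vadd (psum t N x) (psum t N y)).
    + intro N. induction N; simpl. rewrite va_0r; auto. rewrite <- IHN, (bl_addv _ (Hb N)). apply va_sw.
    + apply lim_add; auto.
  - intros a x. apply (lim_unique (fun N => psum t N (vscal a x))); auto.
    apply lim_ext with (u := fun N => vscal a (psum t N x)).
    + intro N. induction N; simpl. apply vs_z. rewrite vs_distv, <- IHN, (bl_scal_ _ (Hb N)). auto.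
    + apply (lim_bl (fun w => vscal a w)); auto. split; [|split].
      * intros. apply vs_distv.
      * intros. rewrite !vs_mul. f_equal. unfold Cmul. f_equal; ring.
      * exists (Cabs a). intro. rewrite n_scal. lra.
  - exists (2 * B). intro v. apply (lim_norm_le _ _ _ (HS v)). intro N.
    pose proof (psum_tail t B v 0 N Bp Ht). simpl in H. rewrite vsub_0r in H.
    eapply Rle_trans. apply H. pose proof (n_ge0 v). assert (0 <= (/2) ^ N) by (apply pow_le; lra).
    assert (0 <= 2 * B * vnorm v) by (apply Rmult_le_pos; lra). nra.
Qed.

Lemma psum_shift (t : nat -> V -> W) (G : W -> W) (H : V -> V) : bounded_linear G ->
  (forall n v, G (t n (H v)) = t (S n) v) ->
  forall N v, psum t (S N) v = vadd (t O v) (G (psum t N (H v))).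
Proof.
  intros HG Hsh. induction N; intro v.
  - simpl. rewrite (bl_0 G HG), va_0l, va_0r. auto.
  - change (psum t (S (S N)) v) with (vadd (psum t (S N) v) (t (S N) v)).
    rewrite IHN. simpl. rewrite (bl_addv G HG), Hsh, va_assoc. auto.
Qed.

End Series.

Section Syl.
Context {V W : CNormSp} {HV : VSp V} {HNV : NSp V} {HW : VSp W} {HNW : NSp W} {CW : CSp W}.

Lemma syl_exists (G : W -> W) (H : V -> V) (C0 : V -> W) :
  bounded_linear G -> bounded_linear H -> bounded_linear C0 -> (qn' G \/ qn' H) ->
  exists X : V -> W, bounded_linear X /\ forall v, X v = vadd (G (X (H v))) (C0 v).
Proof.
  intros HG HH HC Hq.
  set (t := fun n v => oppow n G (C0 (oppow n H v))).
  destruct (bl_bnd G HG) as [Kg [Kgp HKg]]. destruct (bl_bnd H HH) as [Kh [Khp HKh]].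
  destruct (bl_bnd C0 HC) as [Kc [Kcp HKc]].
  assert (HB : exists B, 0 <= B /\ forall n v, vnorm (t n v) <= B * (/2) ^ n * vnorm v).
  { destruct Hq as [Hq|Hq].
    - destruct (Hq (/ (2 * (Kh + 1)))) as [K [Kp HK]]. apply Rinv_0_lt_compat; lra.
      exists (K * Kc). split. apply Rmult_le_pos; auto. intros n v. unfold t.
      eapply Rle_trans. apply HK. pose proof (n_ge0 v).
      assert (A : vnorm (C0 (oppow n H v)) <= Kc * (Kh ^ n * vnorm v)).
      { eapply Rle_trans. apply HKc. apply Rmult_le_compat_l; auto. apply (oppow_bnd n H Kh Khp HKh). }
      assert (0 <= (/ (2 * (Kh + 1))) ^ n) by (apply pow_le; left; apply Rinv_0_lt_compat; lra).
      eapply Rle_trans. apply Rmult_le_compat_l. apply Rmult_le_pos; auto. apply A.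
      assert (E : K * (/ (2 * (Kh + 1))) ^ n * (Kc * (Kh ^ n * vnorm v)) =
                  K * Kc * (/2) ^ n * vnorm v * (Kh / (Kh + 1)) ^ n).
      { rewrite Rinv_mult, Rpow_mult_distr. unfold Rdiv. rewrite Rpow_mult_distr. ring. }
      rewrite E. rewrite <- (Rmult_1_r (K * Kc * (/ 2) ^ n * vnorm v)) at 2.
      apply Rmult_le_compat_l. assert (0 <= (/2)^n) by (apply pow_le; lra).
      repeat apply Rmult_le_pos; auto.
      apply Rle_trans with (1 ^ n). apply pow_incr. apply frac_le1; auto. rewrite pow1; lra.
    - destruct (Hq (/ (2 * (Kg + 1)))) as [K [Kp HK]]. apply Rinv_0_lt_compat; lra.
      exists (K * Kc). split. apply Rmult_le_pos; auto. intros n v. unfold t.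
      eapply Rle_trans. apply (oppow_bnd n G Kg Kgp HKg). pose proof (n_ge0 v).
      assert (A : vnorm (C0 (oppow n H v)) <= Kc * (K * (/ (2 * (Kg + 1))) ^ n * vnorm v)).
      { eapply Rle_trans. apply HKc. apply Rmult_le_compat_l; auto. }
      assert (0 <= (/ (2 * (Kg + 1))) ^ n) by (apply pow_le; left; apply Rinv_0_lt_compat; lra).
      eapply Rle_trans. apply Rmult_le_compat_l. apply pow_le; auto. apply A.
      assert (E : Kg ^ n * (Kc * (K * (/ (2 * (Kg + 1))) ^ n * vnorm v)) =
                  K * Kc * (/2) ^ n * vnorm v * (Kg / (Kg + 1)) ^ n).
      { rewrite Rinv_mult, Rpow_mult_distr. unfold Rdiv. rewrite Rpow_mult_distr. ring. }
      rewrite E. rewrite <- (Rmult_1_r (K * Kc * (/ 2) ^ n * vnorm v)) at 2.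
      apply Rmult_le_compat_l. assert (0 <= (/2)^n) by (apply pow_le; lra).
      repeat apply Rmult_le_pos; auto.
      apply Rle_trans with (1 ^ n). apply pow_incr. apply frac_le1; auto. rewrite pow1; lra. }
  destruct HB as [B [Bp HB]].
  assert (Htb : forall n, bounded_linear (t n)).
  { intro n. unfold t. apply bl_comp; auto. apply oppow_bl; auto. apply bl_comp; auto. apply oppow_bl; auto. }
  destruct (series_exists t B Bp Htb HB) as [X [HX HXl]].
  exists X. split; auto. intro v.
  assert (Hsh : forall n v, G (t n (H v)) = t (S n) v).
  { intros n v'. unfold t. simpl. rewrite <- (oppow_S' n H v'). reflexivity. }
  apply (lim_unique (fun N => psum t (S N) v)).
  - apply (lim_shift (fun N => psum t N v)). auto.
  - apply lim_ext with (u := fun N => vadd (t O v) (G (psum t N (H v)))).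
    intro N. symmetry. apply (psum_shift t G H HG Hsh).
    rewrite va_comm. apply lim_add. apply lim_const. apply lim_bl; auto.
Qed.

End Syl.

Section TriQn.
Context {V1 V2 : CNormSp} {HV1 : VSp V1} {HN1 : NSp V1} {HV2 : VSp V2} {HN2 : NSp V2}.

Fixpoint bs (qa : V1 -> V1) (qd : V2 -> V2) (k : V1 -> V2) (n : nat) (v : V1) : V2 :=
  match n with O => vzero | S n' => vadd (qd (bs qa qd k n' v)) (k (oppow n' qa v)) end.

Lemma tri_pow (qa : V1 -> V1) (qd : V2 -> V2) (k : V1 -> V2) : bounded_linear qd ->
  forall n v u, oppow n (fun p : prodsp V1 V2 => (qa (fst p), vadd (k (fst p)) (qd (snd p)))) (v, u) =
    (oppow n qa v, vadd (bs qa qd k n v) (oppow n qd u)).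
Proof.
  intros Hd n v u. induction n.
  - simpl. rewrite va_0l. auto.
  - change (oppow (S n) ?T ?x) with (T (oppow n T x)). rewrite IHn. simpl. f_equal. rewrite (bl_addv qd Hd).
    rewrite va_assoc. f_equal. apply va_comm.
Qed.

Lemma tri_qn' (qa : V1 -> V1) (qd : V2 -> V2) (k : V1 -> V2) :
  bounded_linear qa -> bounded_linear qd -> bounded_linear k -> qn' qa -> qn' qd ->
  qn' (fun p : prodsp V1 V2 => (qa (fst p), vadd (k (fst p)) (qd (snd p)))).
Proof.
  intros Ha Hd Hk Hqa Hqd dl Hdl. set (e := dl / 2).
  assert (He : 0 < e) by (unfold e; lra).
  destruct (Hqa e He) as [K1' [K1p HK1']]. destruct (Hqd e He) as [K2 [K2p HK2]].
  destruct (bl_bnd k Hk) as [Kk [Kkp HKk]].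
  set (K1 := Rmax K1' 1).
  assert (K1g : 1 <= K1) by apply Rmax_r.
  assert (HK1 : forall n v, vnorm (oppow n qa v) <= K1 * e ^ n * vnorm v).
  { intros n v. eapply Rle_trans. apply HK1'. apply Rmult_le_compat_r. apply n_ge0.
    apply Rmult_le_compat_r. apply pow_le; lra. apply Rmax_l. }
  set (C := K1 * K2 * Kk).
  assert (Cp : 0 <= C) by (unfold C; repeat apply Rmult_le_pos; lra).
  assert (Hbs : forall n m v, vnorm (oppow m qd (bs qa qd k (S n) v)) <= INR (S n) * C * e ^ (m + n) * vnorm v).
  { intros n. induction n; intros m v.
    - simpl. rewrite (bl_0 qd Hd), va_0l. eapply Rle_trans. apply HK2.
      eapply Rle_trans. apply Rmult_le_compat_l. apply Rmult_le_pos; auto. apply pow_le; lra. apply HKk.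
      rewrite Nat.add_0_r. unfold C. pose proof (n_ge0 v). assert (0 <= e ^ m) by (apply pow_le; lra).
      assert (0 <= K2 * e ^ m * (Kk * vnorm v)) by (repeat apply Rmult_le_pos; lra).
      assert (E : 1 * (K1 * K2 * Kk) * e ^ m * vnorm v = K1 * (K2 * e ^ m * (Kk * vnorm v))) by ring.
      rewrite E. rewrite <- (Rmult_1_l (K2 * e ^ m * (Kk * vnorm v))) at 1.
      apply Rmult_le_compat_r; lra.
    - change (bs qa qd k (S (S n)) v) with (vadd (qd (bs qa qd k (S n) v)) (k (oppow (S n) qa v))).
      rewrite (bl_addv _ (oppow_bl m qd Hd)).
      eapply Rle_trans. apply n_tri. rewrite <- oppow_S'.
      assert (A1 := IHn (S m) v).
      assert (A2 : vnorm (oppow m qd (k (oppow (S n) qa v))) <= C * e ^ (m + S n) * vnorm v).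
      { eapply Rle_trans. apply HK2. pose proof (n_ge0 v). assert (0 <= e ^ m) by (apply pow_le; lra).
        eapply Rle_trans. apply Rmult_le_compat_l. apply Rmult_le_pos; auto. apply HKk.
        eapply Rle_trans. apply Rmult_le_compat_l. apply Rmult_le_pos; auto. apply Rmult_le_compat_l. auto. apply HK1.
        right. unfold C. rewrite pow_add. ring. }
      replace (S m + n)%nat with (m + S n)%nat in A1 by lia.
      rewrite (S_INR (S n)). lra. }
  exists (K1 + K2 + 2 * C / dl). split.
  { assert (0 <= 2 * C / dl) by (unfold Rdiv; apply Rmult_le_pos; [lra| left; apply Rinv_0_lt_compat; lra]). lra. }
  intros n [v u]. rewrite tri_pow by auto. simpl.
  pose proof (n_ge0 v). pose proof (n_ge0 u).
  assert (P1 : vnorm (oppow n qa v) <= K1 * dl ^ n * vnorm v).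
  { eapply Rle_trans. apply HK1. apply Rmult_le_compat_r; auto. apply Rmult_le_compat_l. lra.
    apply pow_incr. unfold e; lra. }
  assert (P2 : vnorm (oppow n qd u) <= K2 * dl ^ n * vnorm u).
  { eapply Rle_trans. apply HK2. apply Rmult_le_compat_r; auto. apply Rmult_le_compat_l. lra.
    apply pow_incr. unfold e; lra. }
  assert (P3 : vnorm (bs qa qd k n v) <= 2 * C / dl * dl ^ n * vnorm v).
  { destruct n. simpl. rewrite n_zero. assert (0 <= 2 * C / dl) by (unfold Rdiv; apply Rmult_le_pos; [lra| left; apply Rinv_0_lt_compat; lra]). nra.
    pose proof (Hbs n O v). simpl in H1.
    eapply Rle_trans. apply H1.
    assert (I1 : INR (S n) <= 2 * 2 ^ n).
    { pose proof (INR_le_2pow (S n)) as H2. change (2 ^ S n) with (2 * 2 ^ n) in H2. lra. }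
    assert (E2 : e ^ n = dl ^ n * (/2) ^ n) by (unfold e, Rdiv; apply Rpow_mult_distr).
    rewrite E2. apply Rmult_le_compat_r; auto.
    assert (E3 : 2 * C / dl * dl ^ S n = 2 * C * dl ^ n) by (simpl; field; lra).
    rewrite E3.
    assert (0 <= (/2)^n) by (apply pow_le; lra). assert (0 <= dl ^ n) by (apply pow_le; lra).
    assert (E4 : 2 ^ n * (/2) ^ n = 1) by (rewrite <- Rpow_mult_distr, Rinv_r, pow1; lra).
    assert (INR (S n) * C * (dl ^ n * (/ 2) ^ n) <= 2 * 2 ^ n * C * (dl ^ n * (/ 2) ^ n)).
    { apply Rmult_le_compat_r. apply Rmult_le_pos; auto. apply Rmult_le_compat_r; auto. }
    eapply Rle_trans. apply H4. right. replace (2 * 2 ^ n * C * (dl ^ n * (/ 2) ^ n)) with (2 * C * dl ^ n * (2 ^ n * (/2)^n)) by ring.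
    rewrite E4. ring. }
  pose proof (n_tri (bs qa qd k n v) (oppow n qd u)).
  assert (0 <= dl ^ n) by (apply pow_le; lra).
  assert (0 <= 2 * C / dl) by (unfold Rdiv; apply Rmult_le_pos; [lra| left; apply Rinv_0_lt_compat; lra]).
  assert (K1 * dl ^ n * vnorm v + 2 * C / dl * dl ^ n * vnorm v + K2 * dl ^ n * vnorm u <=
          (K1 + K2 + 2 * C / dl) * dl ^ n * (vnorm v + vnorm u)).
  { assert (0 <= K2 * dl ^ n * vnorm v) by (repeat apply Rmult_le_pos; lra).
    assert (0 <= K1 * dl ^ n * vnorm u) by (repeat apply Rmult_le_pos; lra).
    assert (0 <= 2 * C / dl * dl ^ n * vnorm u) by (apply Rmult_le_pos; [apply Rmult_le_pos|]; lra). nra. }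
  lra.
Qed.

End TriQn.

From Stdlib Require Import List.
Import ListNotations.
Open Scope R_scope.

Section GS.
Context {V : CNormSp} {HV : VSp V}.

Inductive gexp := GAtom (n : nat) | GZero | GAdd (a b : gexp) | GOpp (a : gexp) | GSub (a b : gexp).

Fixpoint ginterp (env : list V) (e : gexp) : V :=
  match e with
  | GAtom n => nth n env vzero
  | GZero => vzero
  | GAdd a b => vadd (ginterp env a) (ginterp env b)
  | GOpp a => vopp (ginterp env a)
  | GSub a b => vsub (ginterp env a) (ginterp env b)
  end.

Fixpoint nmul (k : nat) (x : V) : V := match k with O => vzero | S k' => vadd x (nmul k' x) end.

Lemma nmul_add k1 k2 x : nmul (k1 + k2) x = vadd (nmul k1 x) (nmul k2 x).
Proof. induction k1; simpl. rewrite va_0l; auto. rewrite IHk1, va_assoc. auto. Qed.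

Definition cf := (nat * nat)%type.
Definition csem (c : cf) (x : V) := vsub (nmul (fst c) x) (nmul (snd c) x).

Fixpoint lsem (env : list V) (l : list cf) : V :=
  match l with
  | [] => vzero
  | c :: l' => vadd (csem c (hd vzero env)) (lsem (tl env) l')
  end.

Fixpoint ladd (l1 l2 : list cf) : list cf :=
  match l1, l2 with
  | [], _ => l2
  | _, [] => l1
  | c1 :: r1, c2 :: r2 => (fst c1 + fst c2, snd c1 + snd c2)%nat :: ladd r1 r2
  end.

Definition lopp (l : list cf) : list cf := map (fun c => (snd c, fst c)) l.

Fixpoint lsingle (n : nat) : list cf := match n with O => [(1%nat, 0%nat)] | S n' => (0%nat, 0%nat) :: lsingle n' end.

Fixpoint gnf (e : gexp) : list cf :=
  match e with
  | GAtom n => lsingle n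
  | GZero => []
  | GAdd a b => ladd (gnf a) (gnf b)
  | GOpp a => lopp (gnf a)
  | GSub a b => ladd (gnf a) (lopp (gnf b))
  end.

Lemma csem_add c1 c2 x : csem (fst c1 + fst c2, snd c1 + snd c2)%nat x = vadd (csem c1 x) (csem c2 x).
Proof. unfold csem; simpl. rewrite !nmul_add, vsub_add_distr. auto. Qed.

Lemma lsem_nil_zero env : lsem env [] = vzero. Proof. auto. Qed.

Lemma ladd_ok env l1 l2 : lsem env (ladd l1 l2) = vadd (lsem env l1) (lsem env l2).
Proof.
  revert env l2. induction l1; intros env l2; simpl. rewrite va_0l; auto.
  destruct l2; simpl. rewrite va_0r; auto.
  rewrite csem_add, IHl1. apply va_sw.
Qed.

Lemma lopp_ok env l : lsem env (lopp l) = vopp (lsem env l).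
Proof.
  revert env. induction l; intros env; simpl. rewrite vopp_zero; auto.
  rewrite IHl, vopp_add. f_equal. unfold csem; simpl. unfold vsub. rewrite vopp_add, vopp_opp, va_comm. auto.
Qed.

Lemma csem_10 x : csem (1%nat, 0%nat) x = x.
Proof. unfold csem; simpl. rewrite va_0r, vsub_0r. auto. Qed.

Lemma csem_00 x : csem (0%nat, 0%nat) x = vzero.
Proof. unfold csem; simpl. apply vsub_self. Qed.

Lemma lsingle_ok env n : lsem env (lsingle n) = nth n env vzero.
Proof.
  revert env. induction n; intros env; simpl.
  - rewrite csem_10, va_0r. destruct env; auto.
  - rewrite csem_00, va_0l, IHn. destruct env; simpl; auto. destruct n; auto.
Qed.

Lemma gnf_ok env e : ginterp env e = lsem env (gnf e).
Proof.
  induction e; simpl.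
  - rewrite lsingle_ok. auto.
  - auto.
  - rewrite ladd_ok, IHe1, IHe2. auto.
  - rewrite lopp_ok, IHe. auto.
  - rewrite ladd_ok, lopp_ok, IHe1, IHe2. auto.
Qed.

Definition lzero (l : list cf) : bool := forallb (fun c => Nat.eqb (fst c) (snd c)) l.

Lemma lzero_ok env l : lzero l = true -> lsem env l = vzero.
Proof.
  revert env. induction l; intros env H; simpl; auto. simpl in H. apply andb_prop in H. destruct H as [H1 H2].
  apply PeanoNat.Nat.eqb_eq in H1. rewrite IHl by auto. unfold csem. rewrite H1, vsub_self, va_0r. auto.
Qed.

Lemma gsolve_ok env e1 e2 : lzero (gnf (GSub e1 e2)) = true -> ginterp env e1 = ginterp env e2.
Proof.
  intro H. apply vsub_eq. change (vsub (ginterp env e1) (ginterp env e2)) with (ginterp env (GSub e1 e2)).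
  rewrite gnf_ok. apply lzero_ok. auto.
Qed.

End GS.

Ltac g_mem x l :=
  match l with
  | nil => constr:(false)
  | cons x _ => constr:(true)
  | cons _ ?l' => g_mem x l'
  end.

Ltac g_atoms t l :=
  match t with
  | vadd ?a ?b => let l1 := g_atoms a l in g_atoms b l1
  | vsub ?a ?b => let l1 := g_atoms a l in g_atoms b l1
  | vopp ?a => g_atoms a l
  | vzero => l
  | _ => let b := g_mem t l in
         match b with
         | true => l
         | false => constr:(cons t l)
         end
  end.

Ltac g_idx x l :=
  match l with
  | cons x _ => constr:(O)
  | cons _ ?l' => let n := g_idx x l' in constr:(S n)
  end.

Ltac g_quote t l :=
  match t with
  | vadd ?a ?b => let qa := g_quote a l in let qb := g_quote b l in constr:(GAdd qa qb)
  | vsub ?a ?b => let qa := g_quote a l in let qb := g_quote b l in constr:(GSub qa qb)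
  | vopp ?a => let qa := g_quote a l in constr:(GOpp qa)
  | vzero => constr:(GZero)
  | _ => let n := g_idx t l in constr:(GAtom n)
  end.

Ltac gsolve :=
  match goal with
  | |- @eq (car ?V) ?L ?R =>
    let l0 := constr:(@nil (car V)) in
    let l1 := g_atoms L l0 in
    let l2 := g_atoms R l1 in
    let l := l2 in
    let qL := g_quote L l in
    let qR := g_quote R l in
    change (ginterp l qL = ginterp l qR);
    apply gsolve_ok; vm_compute; reflexivity
  end.

Section Test.
Context {V : CNormSp} {HV : VSp V}.
Goal forall a b c d : V, vadd (vsub a b) (vadd c (vopp d)) = vsub (vadd c a) (vadd d b).
Proof. intros. gsolve. Qed.
End Test.

Lemma qn'_ext {V : CNormSp} (T T' : V -> V) : (forall v, T v = T' v) -> qn' T -> qn' T'.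
Proof.
  intros E H e He. destruct (H e He) as [K [Kp HK]]. exists K. split; auto. intros n x.
  rewrite <- (oppow_ext n T T' E). apply HK.
Qed.

Section Tri.
Context {V1 V2 : CNormSp} {HV1 : VSp V1} {HN1 : NSp V1} {HV2 : VSp V2} {HN2 : NSp V2} {CV2 : CSp V2}.

Lemma tri_gd (a : V1 -> V1) (c : V1 -> V2) (d : V2 -> V2) :
  bounded_linear a -> bounded_linear c -> bounded_linear d -> has_gDrazin a -> has_gDrazin d ->
  has_gDrazin (fun p : prodsp V1 V2 => (a (fst p), vadd (c (fst p)) (d (snd p)))).
Proof.
  intros Ha Hc Hd Ga Gd.
  destruct (has_gd a Ha Ga) as [x Hx]. destruct (has_gd d Hd Gd) as [y Hy].
  pose proof (gd_bl _ _ Hx) as Hxb. pose proof (gd_bl _ _ Hy) as Hyb.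
  assert (ca : forall v, a (x v) = x (a v)) by apply (gd_comm _ _ Hx).
  assert (xax : forall v, x (a (x v)) = x v) by apply (gd_xax _ _ Hx).
  assert (cd : forall u, d (y u) = y (d u)) by apply (gd_comm _ _ Hy).
  assert (ydy : forall u, y (d (y u)) = y u) by apply (gd_xax _ _ Hy).
  assert (dyy : forall u, d (y (y u)) = y u) by (intro u; rewrite cd, ydy; auto).
  set (pa := pi_ a x). set (pd := pi_ d y).
  assert (Hpa : bounded_linear pa) by (apply pi_bl; auto).
  assert (Hpd : bounded_linear pd) by (apply pi_bl; auto).
  assert (pa_pa : forall v, pa (pa v) = pa v) by apply (pi_pi a x Ha Hx).
  assert (pa_a : forall v, pa (a v) = a (pa v)) by apply (pi_a a x Ha Hx).
  assert (pa_x : forall v, pa (x v) = vzero) by apply (pi_x a x Hx).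
  assert (pd_pd : forall v, pd (pd v) = pd v) by apply (pi_pi d y Hd Hy).
  assert (pd_d : forall v, pd (d v) = d (pd v)) by apply (pi_a d y Hd Hy).
  assert (y_pd : forall v, y (pd v) = vzero) by apply (x_pi d y Hy).
  assert (qa : qn' (fun v => a (pa v))) by (apply (qn'_ext _ _ (q_eq a x Ha)); apply (gd_qn _ _ Hx)).
  assert (qd : qn' (fun v => d (pd v))) by (apply (qn'_ext _ _ (q_eq d y Hd)); apply (gd_qn _ _ Hy)).
  destruct (syl_exists y (fun v => a (pa v)) (fun v => y (y (c (pa v))))) as [w1 [Hw1 E1]]; auto.
  { apply bl_comp; auto. } { repeat (apply bl_comp; auto). }
  destruct (syl_exists (fun u => d (pd u)) x (fun v => pd (c (x (x v))))) as [w2 [Hw2 E2]]; auto.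
  { apply bl_comp; auto. } { repeat (apply bl_comp; auto). }
  assert (F1 : forall z, d (y (w1 z)) = w1 z).
  { intro z. rewrite (E1 z). rewrite (bl_addv y Hyb), (bl_addv d Hd), !dyy. auto. }
  assert (F4 : forall v, w1 (pa v) = w1 v).
  { intro v. rewrite (E1 (pa v)), (E1 v), !pa_pa. auto. }
  assert (F2 : forall v, pd (w2 v) = w2 v).
  { intro v. rewrite (E2 v). rewrite (bl_addv pd Hpd), pd_d, !pd_pd. auto. }
  assert (F3 : forall v, w2 (a (x v)) = w2 v).
  { intro v. rewrite (E2 (a (x v))), (E2 v), xax. auto. }
  assert (D1 : forall v, d (w1 v) = vadd (w1 (a v)) (y (c (pa v)))).
  { intro v. rewrite (E1 v). rewrite (bl_addv d Hd), F1, dyy, <- pa_a, F4. auto. }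
  assert (D2 : forall v, w2 (a v) = vadd (d (w2 v)) (pd (c (x v)))).
  { intro v. rewrite (E2 (a v)). rewrite <- (ca v), F3, xax, F2. auto. }
  assert (G1 : forall v, w1 (a (x v)) = vzero).
  { intro v. rewrite <- F4, pa_a, pa_x, (bl_0 a Ha), (bl_0 w1 Hw1). auto. }
  assert (G2 : forall u, y (w2 u) = vzero).
  { intro u. rewrite <- F2, y_pd. auto. }
  assert (G3 : forall v, w1 v = vadd (y (w1 (a v))) (y (y (c (pa v))))).
  { intro v. rewrite (E1 v) at 1. rewrite <- pa_a, F4. auto. }
  set (w := fun v => vadd (vadd (w1 v) (w2 v)) (vopp (y (c (x v))))).
  assert (Hw : bounded_linear w).
  { unfold w. apply bl_plus; auto. apply bl_plus; auto. apply bl_neg; auto. repeat (apply bl_comp; auto). }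
  assert (Rpa : forall v, pa v = vsub v (a (x v))) by reflexivity.
  assert (Rpd : forall v, pd v = vsub v (d (y v))) by reflexivity.
  assert (Eq2 : forall v, vadd (c (x v)) (d (w v)) = vadd (w (a v)) (y (c v))).
  { intro v. unfold w. rewrite !(bl_addv d Hd), (bl_opp d Hd), D1, D2.
    rewrite Rpa, (Rpd (c (x v))), (bl_sub c Hc), (bl_sub y Hyb), ca. gsolve. }
  assert (Eq2' : forall v, d (w v) = vsub (vadd (w (a v)) (y (c v))) (c (x v))).
  { intro v. rewrite <- Eq2. gsolve. }
  assert (Eq1 : forall v, vadd (vadd (w (a (x v))) (y (c (x v)))) (y (d (w v))) = w v).
  { intro v. rewrite Eq2'. rewrite (bl_sub y Hyb), (bl_addv y Hyb). unfold w.
    rewrite !(bl_addv y Hyb), (bl_opp y Hyb), G2, G1, F3, xax.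
    rewrite (G3 v). rewrite Rpa, (bl_sub c Hc), !(bl_sub y Hyb), ca. gsolve. }
  apply gd_has with (x := fun p : prodsp V1 V2 => (x (fst p), vadd (w (fst p)) (y (snd p)))).
  split; [|split; [|split]].
  - apply bl_pair. apply bl_comp; auto. apply bl_fst. apply bl_plus; auto.
    apply bl_comp; auto. apply bl_fst. apply bl_comp; auto. apply bl_snd.
  - intros [v u]. simpl. apply pair_eq. apply xax.
    rewrite (bl_addv y Hyb), (bl_addv d Hd), (bl_addv y Hyb), ydy. rewrite <- (Eq1 v) at 2. gsolve.
  - intros [v u]. simpl. apply pair_eq. apply ca.
    rewrite (bl_addv y Hyb), (bl_addv d Hd), cd. rewrite va_assoc, Eq2. gsolve.
  - set (k := fun v => vsub (c (pa v)) (d (vadd (c (x v)) (d (w v))))).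
    apply qn'_ext with (T := fun p : prodsp V1 V2 => (a (pa (fst p)), vadd (k (fst p)) (d (pd (snd p))))).
    + intros [v u]. simpl. apply pair_eq.
      * rewrite <- (q_eq a x Ha). reflexivity.
      * unfold k. rewrite Rpa, Rpd, !(bl_sub c Hc), !(bl_sub d Hd), !(bl_addv d Hd). gsolve.
    + apply (tri_qn' (fun v => a (pa v)) (fun u => d (pd u)) k); auto. apply bl_comp; auto. apply bl_comp; auto.
      unfold k. apply bl_minus; auto. apply bl_comp; auto. apply bl_comp; auto. apply bl_plus; auto.
      apply bl_comp; auto. apply bl_comp; auto.
Qed.

End Tri.

Section PQ.
Context {V : CNormSp} {HV : VSp V} {HN : NSp V} {CV : CSp V}.

Lemma gd_zero : has_gDrazin (fun _ : V => (@vzero V)).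
Proof.
  apply gd_has with (x := fun _ => vzero). split; [|split; [|split]]; auto.
  apply bl_zero.
  intros e He. exists 1. split. lra. intros n x. destruct n.
  - simpl. lra.
  - simpl. unfold vsub. rewrite vopp_zero, va_0r, n_zero. pose proof (n_ge0 x). assert (0 <= e ^ n) by (apply pow_le; lra).
    assert (0 <= e * e ^ n) by (apply Rmult_le_pos; lra). nra.
Qed.

Lemma pq0_gd (p q : V -> V) : bounded_linear p -> bounded_linear q -> has_gDrazin p -> has_gDrazin q ->
  (forall v, p (q v) = vzero) -> has_gDrazin (fun v => vadd (p v) (q v)).
Proof.
  intros Hp Hq Gp Gq E.
  apply (cline (fun z : prodsp V V => vadd (fst z) (q (snd z))) (fun v => (p v, v) : prodsp V V)).
  - apply bl_plus; auto. apply bl_fst. apply bl_comp; auto. apply bl_snd.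
  - apply bl_pair; auto. apply bl_id.
  - apply has_ext with (a := fun z : prodsp V V => ((p (fst z), vadd ((fun v => v) (fst z)) (q (snd z))) : prodsp V V)).
    + exact (tri_gd p (fun v => v) q Hp bl_id Hq Gp Gq).
    + intros [v u]. simpl. apply pair_eq; auto. rewrite (bl_addv p Hp), E, va_0r. auto.
Qed.

End PQ.

Ltac lin := repeat first [
  progress (rewrite ?va_0r, ?va_0l) |
  match goal with H : bounded_linear ?f |- _ => progress (rewrite ?(bl_addv f H), ?(bl_0 f H)) end |
  match goal with H : forall _, _ = vzero |- _ => progress (rewrite ?H) end ].

Theorem theorem3p3 (X Y : CNormSp) (HX : is_CBanach X) (HY : is_CBanach Y)
  (A : X -> X) (B : Y -> X) (Cc : X -> Y) (D : Y -> Y)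
  (hA : bounded_linear A) (hB : bounded_linear B)
  (hC : bounded_linear Cc) (hD : bounded_linear D)
  (gA : has_gDrazin A) (gD : has_gDrazin D)
  (hABC : forall x : X, A (B (Cc x)) = vzero)
  (hABD : forall y : Y, A (B (D y)) = vzero)
  (hDCB : forall y : Y, D (Cc (B y)) = vzero)
  (hBCBC : forall x : X, B (Cc (B (Cc x))) = vzero)
  (hBCBD : forall y : Y, B (Cc (B (D y))) = vzero) :
  has_gDrazin (opmatrix A B Cc D).
Proof.
  destruct HX as [VX [NX CX]]. destruct HY as [VY [NY CY]].
  pose proof (VX : VSp X) as IVX. pose proof (NX : NSp X) as INX. pose proof (CX : CSp X) as ICX.
  pose proof (VY : VSp Y) as IVY. pose proof (NY : NSp Y) as INY. pose proof (CY : CSp Y) as ICY.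
  clear VX NX CX VY NY CY.
  set (t := opmatrix A B Cc D).
  assert (Ht : bounded_linear t).
  { unfold t, opmatrix. apply bl_pair; apply bl_plus; apply bl_comp; auto using bl_fst, bl_snd. }
  apply gd_root; auto.
  set (K := fun z : prodsp X Y => vadd (A (fst z)) (B (snd z))).
  set (R := fun z : prodsp X Y => vadd (Cc (fst z)) (D (snd z))).
  set (fL := fun w : X => t (t ((w, vzero) : prodsp X Y))).
  set (fR := fun y : Y => t (t ((vzero, y) : prodsp X Y))).
  assert (HK : bounded_linear K) by (unfold K; apply bl_plus; apply bl_comp; auto using bl_fst, bl_snd).
  assert (HR : bounded_linear R) by (unfold R; apply bl_plus; apply bl_comp; auto using bl_fst, bl_snd).
  assert (HfL : bounded_linear fL).
  { unfold fL. apply bl_comp; auto. apply bl_comp; auto. apply bl_pair. apply bl_id. apply bl_zero. }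
  assert (HfR : bounded_linear fR).
  { unfold fR. apply bl_comp; auto. apply bl_comp; auto. apply bl_pair. apply bl_zero. apply bl_id. }
  apply has_ext with (a := fun z => vadd (fL (K z)) (fR (R z))).
  2:{ intros [z1 z2]. unfold fL, fR, K, R, t, opmatrix. simpl. apply pair_eq; lin; gsolve. }
  assert (GCAB : has_gDrazin (fun y : Y => Cc (A (B y)))).
  { apply (cline Cc (fun y => A (B y))); auto. apply bl_comp; auto.
    apply has_ext with (a := fun _ : X => (@vzero X)). apply gd_zero. intro; auto. }
  apply pq0_gd.
  - apply bl_comp; auto.
  - apply bl_comp; auto.
  - apply (cline fL K); auto.
    set (F := fun w : X => vadd (Cc (A w)) (D (Cc w))).
    assert (HF : bounded_linear F) by (unfold F; apply bl_plus; apply bl_comp; auto; apply bl_comp; auto).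
    apply has_ext with (a := fun w => vadd (A (A (A w))) (B (F w))).
    2:{ intro w. unfold fL, F, K, t, opmatrix. simpl. lin. gsolve. }
    apply pq0_gd.
    + repeat (apply bl_comp; auto).
    + apply bl_comp; auto.
    + apply gd_cube; auto.
    + apply (cline B F); auto.
      apply has_ext with (a := fun y : Y => Cc (A (B y))); auto.
      intro y. unfold F. lin. auto.
    + intro w. unfold F. lin. auto.
  - apply (cline fR R); auto.
    apply has_ext with (a := fun y => vadd (Cc (A (B y))) (vadd (D (D (D y))) (Cc (B (D y))))).
    2:{ intro y. unfold fR, R, t, opmatrix. simpl. lin. gsolve. }
    apply pq0_gd.
    + repeat (apply bl_comp; auto).
    + apply bl_plus. repeat (apply bl_comp; auto). repeat (apply bl_comp; auto).
    + auto.
    + apply pq0_gd.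
      * repeat (apply bl_comp; auto).
      * repeat (apply bl_comp; auto).
      * apply gd_cube; auto.
      * apply (cline Cc (fun y => B (D y))); auto. apply bl_comp; auto.
        apply (cline B (fun w => D (Cc w))); auto. apply bl_comp; auto.
        apply has_ext with (a := fun _ : Y => (@vzero Y)). apply gd_zero. intro; auto.
      * intro y. lin. auto.
    + intro y. lin. auto.
  - intros [z1 z2]. unfold fL, fR, K, R, t, opmatrix. simpl. lin. auto.
Qed.
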